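(* Every $5$-divisible spanning set $\mathcal{S}$ of $25$ points in $\mathrm{PG}(3,5)$ is a $2$-cylinder, i.e. the union of the point sets $L_i\setminus\{F\}$, $i=1,\dots,5$, of five distinct lines $L_1,\dots,L_5$ through a common point $F$ (with $F$ removed).
   Context: $\mathrm{PG}(3,q)$ is the projective space of $\mathbb{F}_q^4$; points, lines and planes are subspaces of dimension $1,2,3$. A set $\mathcal{S}$ of points is spanning if it spans $\mathbb{F}_q^4$ (is not contained in a plane), and it is $q$-divisible if $|\mathcal{S}\cap H|\equiv|\mathcal{S}|\pmod q$ for every plane $H$. *)

(* Defs.v *)
From mathcomp Require Import all_boot all_algebra.
Set Implicit Arguments. Unset Strict Implicit. Unset Printing Implicit Defensive.
Import GRing.Theory.
Local Open Scope ring_scope.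

(* PG(3,q) over the field F = 'F_q: subspaces of F^4 are represented
   canonically by their row-space matrices, i.e. square 4x4 matrices A
   with <<A>>%MS = A (genmx is a canonical representative of the row space). *)
Section PG3.
Variable F : finFieldType.

Definition subsp (k : nat) : {set 'M[F]_4} :=
  [set A : 'M[F]_4 | (<<A>>%MS == A) && (\rank A == k)].

Definition PGpoints := subsp 1.
Definition PGlines  := subsp 2.
Definition PGplanes := subsp 3.

Definition incident (A B : 'M[F]_4) : bool := (A <= B)%MS.

Definition onsub (S : {set 'M[F]_4}) (H : 'M[F]_4) : {set 'M[F]_4} :=
  [set P in S | incident P H].

Definition spanning (S : {set 'M[F]_4}) : bool :=
  \rank (\sum_(P in S) P)%MS == 4%N.

Definition divisible (q : nat) (S : {set 'M[F]_4}) : Prop :=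
  forall H, H \in PGplanes -> #|onsub S H| = #|S| %[mod q].

Definition cylinder (t : nat) (S : {set 'M[F]_4}) : Prop :=
  exists (F0 : 'M[F]_4) (L : 'I_t -> 'M[F]_4),
    [/\ F0 \in PGpoints,
        forall i, L i \in PGlines,
        injective L,
        forall i, incident F0 (L i) &
        S = [set P in PGpoints | (P != F0) && [exists i, incident P (L i)]]].
End PG3.

(* Main.v *)
Require Import Defs.
From mathcomp Require Import all_boot all_algebra.
From mathcomp Require Import zify.
Set Implicit Arguments. Unset Strict Implicit. Unset Printing Implicit Defensive.

Lemma card_sumb (T : finType) (A : {pred T}) (P : pred T) :
  #|[set x in A | P x]| = \sum_(x in A) (P x : nat).
Proof.
rewrite -sum1_card [LHS]big_mkcond [RHS]big_mkcond; apply: eq_bigr => x _.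
by rewrite inE; case: (x \in A); case: (P x).
Qed.

Lemma card_sumb' (T : finType) (P : pred T) :
  #|[set x | P x]| = \sum_x (P x : nat).
Proof.
rewrite -sum1_card big_mkcond /=; apply: eq_bigr => x _.
by rewrite inE; case: (P x).
Qed.

Lemma sum_condb (T : finType) (P Q : pred T) :
  \sum_(i | P i) (Q i : nat) = #|[set i | P i && Q i]|.
Proof.
rewrite card_sumb' [LHS]big_mkcond; apply: eq_bigr => i _.
by case: (P i).
Qed.

Section Core.
Variables (Pt Pl Ln : finType) (inc : Pt -> Pl -> bool) (onl : Pt -> Ln -> bool).
Definition sub m h := [forall x, onl x m ==> inc x h].
Hypothesis Hpl31 : forall h, #|[set x | inc x h]| = 31.
Hypothesis Hpt31 : forall p, #|[set h | inc p h]| = 31.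
Hypothesis Hl6 : forall m, #|[set x | onl x m]| = 6.
Hypothesis Hjoin : forall x y, x != y -> #|[set m | onl x m && onl y m]| = 1.
Hypothesis Hsub2 : forall m h x y, x != y -> onl x m -> onl y m -> inc x h -> inc y h -> sub m h.
Hypothesis Hpen6 : forall m, #|[set h | sub m h]| = 6.
Hypothesis Hpen1 : forall m x, ~~ onl x m -> #|[set h | sub m h && inc x h]| = 1.

Lemma line_uniq x y m m' : x != y -> onl x m -> onl y m -> onl x m' -> onl y m' -> m = m'.
Proof.
move=> xy h1 h2 h3 h4.
have : #|[set m | onl x m && onl y m]| <= 1 by rewrite Hjoin.
by move/card_le1_eqP; apply; rewrite inE ?h1 ?h2 ?h3 ?h4.
Qed.

Lemma line_ex x y : x != y -> exists m, onl x m && onl y m.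
Proof.
move=> xy; have := Hjoin xy; move/eqP; rewrite eqn_leq => /andP[_].
by rewrite card_gt0 => /set0Pn [m]; rewrite inE; exists m.
Qed.

Lemma subP m h x : sub m h -> onl x m -> inc x h.
Proof. by move=> /forallP /(_ x) /implyP. Qed.

Variable S : {set Pt}.
Hypothesis HS25 : #|S| = 25.
Hypothesis Hdiv : forall h, 5 %| #|[set x in S | inc x h]|.

Definition n h := #|[set x in S | inc x h]|.
Definition s m := #|[set x in S | onl x m]|.

Lemma pencil_sum m : \sum_(h | sub m h) n h = 25 + 5 * s m.
Proof.
rewrite /n (eq_bigr (fun h => \sum_(x in S) (inc x h : nat))); last first.
  by move=> h _; rewrite card_sumb.
rewrite exchange_big /=.
transitivity (\sum_(x in S) (1 + 5 * onl x m)).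
  apply: eq_bigr => x xS; rewrite sum_condb.
  case: (boolP (onl x m)) => Hx /=.
    apply: (@eq_trans _ _ 6) => //.
    rewrite -(Hpen6 m); apply: eq_card => h; rewrite !inE.
    by case Hs: (sub m h) => //=; rewrite (subP Hs Hx).
  by rewrite Hpen1.
rewrite big_split /= sum1_card HS25 -big_distrr /= /s card_sumb.
by [].
Qed.

Lemma star_sum p : p \in S -> \sum_(h | inc p h) n h = 175.
Proof.
move=> pS.
rewrite /n (eq_bigr (fun h => \sum_(x in S) (inc x h : nat))); last first.
  by move=> h _; rewrite card_sumb.
rewrite exchange_big /= (bigD1 p) //= sum_condb.
have -> : #|[set i | inc p i && inc p i]| = 31.
  by rewrite -(Hpt31 p); apply: eq_card => h; rewrite !inE andbb.
rewrite (eq_bigr (fun _ => 6)); last first.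
  move=> x /andP[xS xp]; rewrite sum_condb.
  have px : p != x by rewrite eq_sym.
  have [m /andP[pm xm]] := line_ex px.
  rewrite -(Hpen6 m); apply: eq_card => h; rewrite !inE.
  apply/andP/idP => [[ph xh]|Hs]; first exact: (Hsub2 px pm xm).
  by rewrite (subP Hs pm) (subP Hs xm).
rewrite sum_nat_const.
have -> : #|[pred i in S | i != p]| = 24.
  have := cardsD1 p S; rewrite pS HS25 => H.
  have -> : #|[pred i in S | i != p]| = #|S :\ p|.
    by apply: eq_card => x; rewrite !inE andbC.
  by move: H; rewrite /= add1n => [[]].
by [].
Qed.

Lemma n_div h : 5 %| n h. Proof. exact: Hdiv. Qed.

Lemma n_gt0 p h : p \in S -> inc p h -> 0 < n h.
Proof. by move=> pS ph; rewrite card_gt0; apply/set0Pn; exists p; rewrite inE pS. Qed.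

Lemma n_ge5 p h : p \in S -> inc p h -> 5 <= n h.
Proof. by move=> pS ph; apply: dvdn_leq; [exact: n_gt0 pS ph | exact: n_div]. Qed.

Lemma s_ge1 p m : p \in S -> onl p m -> 1 <= s m.
Proof. by move=> pS pm; rewrite card_gt0; apply/set0Pn; exists p; rewrite inE pS. Qed.

Lemma A_sum p : p \in S -> \sum_(h | inc p h) (n h - 5) = 20.
Proof.
move=> pS.
have E : \sum_(h | inc p h) n h = \sum_(h | inc p h) (n h - 5) + \sum_(h | inc p h) 5.
  by rewrite -big_split; apply: eq_bigr => h ph /=; rewrite subnK // (n_ge5 pS ph).
have F : \sum_(h | inc p h) 5 = 155.
  by rewrite sum_nat_const (_ : #|_| = 31) // -(Hpt31 p); apply: eq_card => h; rewrite inE.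
move: E; rewrite F star_sum //; lia.
Qed.

Lemma B_sum p m : p \in S -> onl p m -> \sum_(h | sub m h) (n h - 5) = 5 * s m - 5.
Proof.
move=> pS pm.
have E : \sum_(h | sub m h) n h = \sum_(h | sub m h) (n h - 5) + \sum_(h | sub m h) 5.
  by rewrite -big_split; apply: eq_bigr => h hm /=; rewrite subnK // (n_ge5 pS (subP hm pm)).
have F : \sum_(h | sub m h) 5 = 30.
  by rewrite sum_nat_const (_ : #|_| = 6) // -(Hpen6 m); apply: eq_card => h; rewrite inE.
move: E; rewrite F pencil_sum; lia.
Qed.

Lemma sum_sub_le p m : p \in S -> onl p m ->
  \sum_(h | sub m h) (n h - 5) <= \sum_(h | inc p h) (n h - 5).
Proof.
move=> pS pm; rewrite [X in _ <= X]big_mkcond [X in X <= _]big_mkcond /=.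
apply: leq_sum => h _; case Hs: (sub m h) => //.
by rewrite (subP Hs pm).
Qed.

Lemma s_le5 p m : p \in S -> onl p m -> s m <= 5.
Proof.
move=> pS pm; have := sum_sub_le pS pm; rewrite (B_sum pS pm) (A_sum pS); lia.
Qed.

Lemma term_le_pencil p m h : p \in S -> onl p m -> sub m h -> n h <= 5 * s m.
Proof.
move=> pS pm hm.
have := B_sum pS pm; rewrite (bigD1 h) //= => E.
have := n_ge5 pS (subP hm pm); have := s_ge1 pS pm; lia.
Qed.

Lemma full_other L p h : p \in S -> onl p L -> s L = 5 -> inc p h -> ~~ sub L h -> n h = 5.
Proof.
move=> pS pL sL ph nLh.
have E := A_sum pS; rewrite (bigID (fun h => sub L h)) /= in E.
have E2 : \sum_(i | inc p i && sub L i) (n i - 5) = 20.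
  rewrite -[RHS](_ : 5 * s L - 5 = 20); last by rewrite sL.
  rewrite -(B_sum pS pL); apply: eq_bigl => i.
  by case Hs: (sub L i); rewrite ?andbT ?andbF // (subP Hs pL).
rewrite E2 in E.
have /eqP : \sum_(i | inc p i && ~~ sub L i) (n i - 5) = 0 by lia.
rewrite sum_nat_eq0 => /forallP /(_ h); rewrite ph nLh /=.
have := n_ge5 pS ph; lia.
Qed.

Lemma cardD1P (T : finType) (A : {set T}) (P : pred T) p : p \in A -> P p ->
  #|[set x in A | P x & x != p]| = #|[set x in A | P x]| - 1.
Proof.
move=> pA Pp; have := cardsD1 p [set x in A | P x]; rewrite inE pA Pp /=.
have -> : [set x in A | P x] :\ p = [set x in A | P x & x != p].
  by apply/setP => x; rewrite !inE; case: (x == p); rewrite ?andbF ?andbT.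
lia.
Qed.

Lemma plane_part p h (T : {set Pt}) : inc p h ->
  \sum_(m | onl p m && sub m h) #|[set x in T | onl x m & x != p]|
  = #|[set x in T | inc x h & x != p]|.
Proof.
move=> ph.
rewrite (eq_bigr (fun m => \sum_(x in T) (onl x m && (x != p) : nat))); last first.
  by move=> m _; rewrite card_sumb.
rewrite exchange_big /= card_sumb; apply: eq_bigr => x xT.
rewrite sum_condb.
case: (eqVneq x p) => [->|xp]; first by rewrite andbF /=; apply/eqP; rewrite cards_eq0;
  apply/eqP/setP => m; rewrite !inE !andbF.
have px : p != x by rewrite eq_sym.
case: (boolP (inc x h)) => xh /=.
  rewrite -(Hjoin px); apply: eq_card => m; rewrite !inE.
  apply/idP/idP => [/and3P[/andP[-> _] -> _] //|/andP[pm xm]].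
  by rewrite pm xm (Hsub2 px pm xm ph xh).
apply/eqP; rewrite cards_eq0; apply/eqP/setP => m; rewrite !inE.
apply/negbTE; apply/negP => /and3P[/andP[_ hm] xm _].
by move: xh; rewrite (subP hm xm).
Qed.

Lemma lines_in_plane p h : inc p h -> #|[set m | onl p m && sub m h]| = 6.
Proof.
move=> ph; have := plane_part setT ph.
rewrite (eq_bigr (fun _ => 5)); last first.
  move=> m /andP[pm _]; rewrite cardD1P ?inE //.
  rewrite (_ : #|_| = 6) // -(Hl6 m); apply: eq_card => x; rewrite !inE //.
rewrite cardD1P ?inE // (_ : #|[set x in setT | inc x h]| = 31); last first.
  by rewrite -(Hpl31 h); apply: eq_card => x; rewrite !inE.
rewrite sum_nat_const.
have -> : #|[pred m | onl p m && sub m h]| = #|[set m | onl p m && sub m h]|.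
  by apply: eq_card => m; rewrite inE.
lia.
Qed.

Lemma plane_sum p h : p \in S -> inc p h ->
  \sum_(m | onl p m && sub m h) (s m - 1) = n h - 1.
Proof.
move=> pS ph; have := plane_part S ph.
rewrite cardD1P // => <-; apply: eq_bigr => m /andP[pm _].
by rewrite cardD1P.
Qed.

Lemma dcount (I J : finType) (A : {set I}) (Q : I -> J -> bool) :
  \sum_(i in A) #|[set j | Q i j]| = \sum_j #|[set i in A | Q i j]|.
Proof.
rewrite (eq_bigr (fun i => \sum_j (Q i j : nat))); last by move=> i _; rewrite card_sumb'.
by rewrite exchange_big /=; apply: eq_bigr => j _; rewrite card_sumb.
Qed.

Lemma sum_lines_plane p h : p \in S -> inc p h ->
  \sum_(m | onl p m && sub m h) s m = n h + 5.
Proof.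
move=> pS ph.
have E : \sum_(m | onl p m && sub m h) s m =
   \sum_(m | onl p m && sub m h) (s m - 1) + \sum_(m | onl p m && sub m h) 1.
  by rewrite -big_split; apply: eq_bigr => m /andP[pm _] /=; rewrite subnK // (s_ge1 pS pm).
rewrite E plane_sum // sum1_card.
have -> : #|[pred m | onl p m && sub m h]| = 6.
  by rewrite -(lines_in_plane ph); apply: eq_card => m; rewrite inE.
have := n_ge5 pS ph; lia.
Qed.

Lemma two_planes h h' m1 m2 : h != h' -> sub m1 h -> sub m2 h -> sub m1 h' -> sub m2 h' ->
  m1 = m2.
Proof.
move=> hh' s1 s2 s1' s2'.
have : 1 < #|[set x | onl x m2]| by rewrite Hl6.
move/card_gt1P => [x [y [xm ym xy]]]; rewrite !inE in xm ym.
case: (boolP (onl x m1)) => xm1; case: (boolP (onl y m1)) => ym1.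
- by apply: (line_uniq xy).
- have : #|[set h | sub m1 h && inc y h]| <= 1 by rewrite Hpen1.
  move/card_le1_eqP => /(_ h h'); rewrite !inE s1 s1' (subP s2 ym) (subP s2' ym) => /(_ isT isT) E.
  by rewrite E eqxx in hh'.
- have : #|[set h | sub m1 h && inc x h]| <= 1 by rewrite Hpen1.
  move/card_le1_eqP => /(_ h h'); rewrite !inE s1 s1' (subP s2 xm) (subP s2' xm) => /(_ isT isT) E.
  by rewrite E eqxx in hh'.
- have : #|[set h | sub m1 h && inc x h]| <= 1 by rewrite Hpen1.
  move/card_le1_eqP => /(_ h h'); rewrite !inE s1 s1' (subP s2 xm) (subP s2' xm) => /(_ isT isT) E.
  by rewrite E eqxx in hh'.
Qed.

Section NoFull.
Hypothesis nofull : forall m, s m != 5.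

Lemma s_le4 m : s m <= 4.
Proof.
case: (posnP (s m)) => [->//|]; rewrite card_gt0 => /set0Pn [p]; rewrite inE => /andP[pS pm].
have := s_le5 pS pm; have := nofull m; lia.
Qed.

Lemma cnt_sub_plane h m : sub m h -> #|[set x in S | onl x m & inc x h]| = s m.
Proof.
by move=> hm; apply: eq_card => x; rewrite !inE; case: (boolP (onl x m)) => // xm; rewrite (subP hm xm) andbT.
Qed.

Lemma n_cases h : [\/ n h = 0, n h = 5 | n h = 10].
Proof.
case: (posnP (n h)) => [->|]; first by constructor 1.
rewrite card_gt0 => /set0Pn [p]; rewrite inE => /andP[pS ph].
have Hsum := sum_lines_plane pS ph.
have Hle : \sum_(m | onl p m && sub m h) s m <= \sum_(m | onl p m && sub m h) 4.
  by apply: leq_sum => m _; apply: s_le4.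
rewrite sum_nat_const (_ : #|_| = 6) in Hle; last first.
  by rewrite -(lines_in_plane ph); apply: eq_card => m; rewrite inE.
have /dvdnP [k Hk] := n_div h.
have Hn5 := n_ge5 pS ph.
have : n h != 15.
  apply/eqP => H15.
  have H2 : forall p', p' \in [set x in S | inc x h] ->
      #|[set m | (onl p' m && sub m h) && (s m == 4)]| = 2.
    move=> p'; rewrite inE => /andP[p'S p'h].
    have := sum_lines_plane p'S p'h; rewrite H15.
    rewrite (eq_bigr (fun m => 3 + (s m == 4))); last first.
      move=> m /andP[p'm hm]; have := term_le_pencil p'S p'm hm; rewrite H15.
      have := s_le4 m; case: (s m == 4) /eqP; lia.
    rewrite big_split /= sum_nat_const (_ : #|_| = 6); last first.
      by rewrite -(lines_in_plane p'h); apply: eq_card => m; rewrite inE.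
    rewrite sum_condb; lia.
  have := dcount [set x in S | inc x h] (fun p' m => (onl p' m && sub m h) && (s m == 4)).
  rewrite (eq_bigr (fun _ => 2)) //.
  rewrite sum_nat_const (_ : #|_| = 15); last by rewrite -H15; apply: eq_card => x; rewrite inE.
  rewrite (eq_bigr (fun m => (sub m h && (s m == 4)) * 4)); last first.
    move=> m _; case: (boolP (sub m h && (s m == 4))) => [/andP[hm /eqP sm4]|Hb].
      rewrite mul1n hm sm4 eqxx -sm4 -(cnt_sub_plane hm); apply: eq_card => x; rewrite !inE !andbT.
      by case: (x \in S); case: (inc x h); case: (onl x m).
    apply/eqP; rewrite mul0n cards_eq0; apply/eqP/setP => x; rewrite !inE.
    apply/negbTE; apply/negP => /andP[_ /andP[/andP[_ hm] sm]]; by move: Hb; rewrite hm sm.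
  rewrite -big_distrl /=; lia.
move: Hsum Hle Hk Hn5 => /=. case: k => [|[|[|[|k]]]] Hsum Hle Hk Hn5 H15 /=; try lia.
- by constructor 2; lia.
- by constructor 3; lia.
Qed.


Lemma n_5_10 p h : p \in S -> inc p h -> n h - 5 = 5 * (n h == 10).
Proof.
move=> pS ph; have := n_ge5 pS ph; case: (n_cases h) => ->; lia.
Qed.

Lemma rich_through p : p \in S -> #|[set h | inc p h && (n h == 10)]| = 4.
Proof.
move=> pS; have := A_sum pS.
rewrite (eq_bigr (fun h => 5 * (n h == 10))); last by move=> h ph; exact: (n_5_10 pS ph).
rewrite -big_distrr /= sum_condb; lia.
Qed.

Lemma rich_count : #|[set h | n h == 10]| = 10.
Proof.
have := dcount S (fun p h => inc p h && (n h == 10)).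
rewrite (eq_bigr (fun _ => 4)); last by move=> p pS; apply: rich_through.
rewrite sum_nat_const HS25.
rewrite (eq_bigr (fun h => (n h == 10) * 10)); last first.
  move=> h _; case: (boolP (n h == 10)) => [/eqP H10|Hb].
    rewrite mul1n -H10; apply: eq_card => x; rewrite !inE andbT //.
  apply/eqP; rewrite mul0n cards_eq0; apply/eqP/setP => x; rewrite !inE.
  by rewrite !andbF.
rewrite -big_distrl /= -card_sumb' /=; lia.
Qed.

Lemma no_full_false : False.
Proof.
have : 0 < #|S| by rewrite HS25.
rewrite card_gt0 => /set0Pn [p pS].
have : 0 < #|[set h | inc p h && (n h == 10)]| by rewrite rich_through.
rewrite card_gt0 => /set0Pn [h0]; rewrite inE => /andP[ph0 /eqP H10].
set T := [set x in S | inc x h0].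
have cT : #|T| = 10 by [].
have E3 : forall p', p' \in T -> \sum_(m | onl p' m && sub m h0) (s m - 2) = 3.
  move=> p'; rewrite inE => /andP[p'S p'h].
  have := sum_lines_plane p'S p'h; rewrite H10.
  have E : \sum_(m | onl p' m && sub m h0) s m =
     \sum_(m | onl p' m && sub m h0) (s m - 2) + \sum_(m | onl p' m && sub m h0) 2.
    rewrite -big_split; apply: eq_bigr => m /andP[p'm hm] /=.
    have := term_le_pencil p'S p'm hm; rewrite H10 => ?; lia.
  rewrite E sum_nat_const (_ : #|_| = 6); last first.
    by rewrite -(lines_in_plane p'h); apply: eq_card => m; rewrite inE.
  lia.
have DC1 : \sum_(p' in T) \sum_(m | onl p' m && sub m h0) (s m - 2)
     = \sum_m (sub m h0) * (s m * (s m - 2)).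
  rewrite (eq_bigr (fun p' => \sum_m ((onl p' m && sub m h0) * (s m - 2)))); last first.
    by move=> p' _; rewrite big_mkcond; apply: eq_bigr => m _; case: (onl p' m && sub m h0); rewrite ?mul1n ?mul0n.
  rewrite exchange_big /=; apply: eq_bigr => m _.
  rewrite -big_distrl /= mulnA; congr (_ * _).
  case: (boolP (sub m h0)) => hm /=.
    rewrite mul1n (eq_bigr (fun i => onl i m : nat)); last by move=> i _; rewrite andbT.
    rewrite -card_sumb -(cnt_sub_plane hm); apply: eq_card => x; rewrite !inE.
    by case: (x \in S); case: (inc x h0); case: (onl x m).
  by rewrite mul0n; apply: big1 => x _; rewrite andbF.
rewrite (eq_bigr (fun _ => 3)) in DC1; last by move=> p' p'T; apply: E3.
rewrite sum_nat_const cT in DC1.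
rewrite (eq_bigr (fun m => 3 * (sub m h0 && (s m == 3)) + 8 * (sub m h0 && (s m == 4)))) in DC1;
  last first.
  move=> m _; have := s_le4 m; case: (sub m h0) => /=; last by lia.
  case: (s m) => [|[|[|[|[|k]]]]] //=.
rewrite big_split /= -!big_distrr /= -!card_sumb' in DC1.
have L1 : forall p', p' \in T -> #|[set m | (onl p' m && sub m h0) && (s m == 4)]| <= 1.
  move=> p' p'T; have := E3 p' p'T.
  have : \sum_(m | onl p' m && sub m h0) 2 * (s m == 4) <= \sum_(m | onl p' m && sub m h0) (s m - 2).
    by apply: leq_sum => m _; case: (s m == 4) /eqP => [->|].
  rewrite -big_distrr /= sum_condb; lia.
have DC2 := dcount T (fun p' m => (onl p' m && sub m h0) && (s m == 4)).
have : \sum_(i in T) #|[set j | (onl i j && sub j h0) && (s j == 4)]| <= \sum_(i in T) 1.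
  by apply: leq_sum => i iT; apply: L1.
rewrite DC2 sum1_card cT.
rewrite (eq_bigr (fun m => (sub m h0 && (s m == 4)) * 4)); last first.
  move=> m _; case: (boolP (sub m h0 && (s m == 4))) => [/andP[hm /eqP sm4]|Hb].
    rewrite mul1n hm sm4 eqxx -sm4 -(cnt_sub_plane hm); apply: eq_card => x; rewrite !inE !andbT.
    by case: (x \in S); case: (inc x h0); case: (onl x m).
  apply/eqP; rewrite mul0n cards_eq0; apply/eqP/setP => x; rewrite !inE.
  apply/negbTE; apply/negP => /andP[_ /andP[/andP[_ hm] sm]]; by move: Hb; rewrite hm sm.
rewrite -big_distrl /= -card_sumb' => HN4.
set N3 := #|[set x | sub x h0 && (s x == 3)]| in DC1.
have HN3 : N3 = 10 by lia.
have O1 : forall m, m \in [set x | sub x h0 && (s x == 3)] ->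
    1 <= #|[set h | (sub m h && (n h == 10)) && (h != h0)]|.
  move=> m; rewrite inE => /andP[hm /eqP sm3].
  have : 0 < s m by rewrite sm3.
  rewrite /s card_gt0 => /set0Pn [q]; rewrite inE => /andP[qS qm].
  have := B_sum qS qm; rewrite sm3.
  rewrite (eq_bigr (fun h => 5 * (n h == 10))); last by move=> h hm'; apply: (n_5_10 qS (subP hm' qm)).
  rewrite -big_distrr /= sum_condb => E.
  have E2 : #|[set i | sub m i && (n i == 10)]| = 2 by lia.
  have := cardsD1 h0 [set i | sub m i && (n i == 10)]; rewrite inE hm H10 eqxx E2 /=.
  have -> : [set i | sub m i && (n i == 10)] :\ h0 = [set h | (sub m h && (n h == 10)) && (h != h0)].
    by apply/setP => x; rewrite !inE andbC.
  lia.
have : \sum_(m in [set x | sub x h0 && (s x == 3)]) 1 <=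
       \sum_(m in [set x | sub x h0 && (s x == 3)]) #|[set h | (sub m h && (n h == 10)) && (h != h0)]|.
  by apply: leq_sum => m Hm; apply: O1.
rewrite sum1_card -/N3 HN3 dcount.
have : \sum_h #|[set i in [set x | sub x h0 && (s x == 3)] | (sub i h && (n h == 10)) && (h != h0)]|
       <= \sum_h ((n h == 10) && (h != h0)).
  apply: leq_sum => h _; case: (boolP ((n h == 10) && (h != h0))) => [/andP[_ hh0]|Hb].
    apply/card_le1_eqP => m1 m2; rewrite !inE => /andP[/andP[s1 _] /andP[/andP[s1' _] _]].
    move=> /andP[/andP[s2 _] /andP[/andP[s2' _] _]].
    by apply: (two_planes (h:=h0) (h':=h)) => //; rewrite eq_sym.
  rewrite leqn0 cards_eq0; apply/eqP/setP => m; rewrite !inE.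
  apply/negbTE; apply/negP => /andP[_ /andP[/andP[_ r] hh]].
  by move: Hb; rewrite r hh.
rewrite -card_sumb'.
have := cardsD1 h0 [set h | n h == 10]; rewrite inE H10 eqxx rich_count.
have -> : [set h | n h == 10] :\ h0 = [set x | (n x == 10) && (x != h0)].
  by apply/setP => x; rewrite !inE andbC.
lia.
Qed.

End NoFull.

Lemma exists_full : exists L, s L = 5.
Proof.
case: (boolP [exists L, s L == 5]) => [/existsP [L /eqP]|H]; first by eauto.
exfalso; apply: no_full_false => m; apply/negP => /eqP E.
by move: H; rewrite negb_exists => /forallP /(_ m); rewrite E.
Qed.

Lemma exC L : s L = 5 -> exists C, onl C L && (C \notin S).
Proof.
move=> HL; case: (boolP [exists C, onl C L && (C \notin S)]) => [/existsP//|H].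
have : [set x | onl x L] \subset [set x in S | onl x L].
  apply/subsetP => x; rewrite !inE => xL; rewrite xL andbT.
  move: H; rewrite negb_exists => /forallP /(_ x); rewrite xL /=; by rewrite negbK.
by move/subset_leq_card; rewrite Hl6 -/(s L) HL.
Qed.

Lemma full_pts m C : s m = 5 -> onl C m -> C \notin S -> forall x, onl x m -> x != C -> x \in S.
Proof.
move=> sm Cm CS x xm xC.
have E : [set x in S | onl x m] == [set x | onl x m] :\ C.
  rewrite eqEcard; apply/andP; split.
    apply/subsetP => y; rewrite !inE => /andP[yS ym]; rewrite ym andbT.
    by apply/eqP => yC; move: CS; rewrite -yC yS.
  have := cardsD1 C [set x | onl x m]; rewrite inE Cm Hl6 -/(s m) sm; lia.
have : x \in [set x | onl x m] :\ C by rewrite !inE xC xm.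
by rewrite -(eqP E) inE => /andP[].
Qed.

Section Full.
Variables (L : Ln) (C : Pt).
Hypotheses (HL : s L = 5) (CL : onl C L) (CS : C \notin S).

Definition lineof R x := odflt L [pick m | onl R m && onl x m].

Lemma lineofP R x : R != x -> onl R (lineof R x) && onl x (lineof R x).
Proof.
move=> Rx; rewrite /lineof; case: pickP => [m Hm //|H].
by have [m Hm] := line_ex Rx; move: (H m); rewrite Hm.
Qed.

Lemma key R : R \in S -> ~~ onl R L -> s (lineof R C) = 5.
Proof.
move=> RS RL.
have Hp1 := Hpen1 RL.
have : 0 < #|[set h | sub L h && inc R h]| by rewrite Hp1.
rewrite card_gt0 => /set0Pn [h0]; rewrite inE => /andP[Lh0 Rh0].
have uniq_h0 : forall h, sub L h -> inc R h -> h = h0.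
  move=> h Lh Rh; have : #|[set h | sub L h && inc R h]| <= 1 by rewrite Hp1.
  by move/card_le1_eqP => /(_ h h0); rewrite !inE Lh Rh Lh0 Rh0 => /(_ isT isT).
have Rx : forall x, onl x L -> R != x.
  by move=> x xL; apply/eqP => E; move: RL; rewrite E xL.
have H1 : forall x, onl x L -> x != C -> 5 * s (lineof R x) = n h0.
  move=> x xL xC.
  have xS := full_pts HL CL CS xL xC.
  have /andP[Rm xm] := lineofP (Rx x xL).
  set m := lineof R x in Rm xm *.
  have mh0 : sub m h0 := Hsub2 (Rx x xL) Rm xm Rh0 (subP Lh0 xL).
  have := pencil_sum m; rewrite (bigD1 h0) //=.
  rewrite (eq_bigr (fun _ => 5)); last first.
    move=> h /andP[mh hh0]; apply: (full_other xS xL HL (subP mh xm)).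
    apply/negP => Lh; move: hh0; by rewrite (uniq_h0 h Lh (subP mh Rm)) eqxx.
  rewrite sum_nat_const.
  have Hk : #|(fun i : Pl => sub m i && (i != h0))| = 5.
    have := cardsD1 h0 [set h | sub m h]; rewrite inE mh0 Hpen6.
    have -> : #|[set h | sub m h] :\ h0| = #|(fun i : Pl => sub m i && (i != h0))|.
      by apply: eq_card => h; rewrite !inE andbC.
    lia.
  rewrite Hk; lia.
have Hinj : {in [set x | onl x L] &, injective (lineof R)}.
  move=> x y; rewrite !inE => xL yL E.
  apply/eqP; apply/negP => /negP xy.
  have /andP[_ xm] := lineofP (Rx x xL); have /andP[Rm ym] := lineofP (Rx y yL).
  rewrite -E in ym Rm.
  have := line_uniq xy xm ym xL yL; move=> EL; by move: RL; rewrite -EL Rm.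
have Himg : [set lineof R x | x in [set x | onl x L]] = [set m | onl R m && sub m h0].
  apply/eqP; rewrite eqEcard; apply/andP; split.
    apply/subsetP => m /imsetP [x]; rewrite inE => xL ->; rewrite inE.
    have /andP[Rm xm] := lineofP (Rx x xL); rewrite Rm /=.
    exact: (Hsub2 (Rx x xL) Rm xm Rh0 (subP Lh0 xL)).
  by rewrite (card_in_imset Hinj) lines_in_plane // Hl6.
have := plane_sum RS Rh0.
have -> : \sum_(m | onl R m && sub m h0) (s m - 1) =
          \sum_(m in [set lineof R x | x in [set x | onl x L]]) (s m - 1).
  by apply: eq_bigl => m; rewrite Himg inE.
rewrite big_imset //= (bigD1 C) ?inE //=.
have H5 : 5 * \sum_(i in [set x | onl x L] | i != C) (s (lineof R i) - 1) = 5 * (n h0 - 5).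
  rewrite big_distrr /= (eq_bigr (fun _ => n h0 - 5)); last first.
    move=> x; rewrite inE => /andP[xL xC]; have := H1 x xL xC; lia.
  rewrite sum_nat_const.
  have Hk : #|(fun i : Pt => (i \in [set x | onl x L]) && (i != C))| = 5.
    have := cardsD1 C [set x | onl x L]; rewrite inE CL Hl6.
    have -> : #|[set x | onl x L] :\ C| = #|(fun i : Pt => (i \in [set x | onl x L]) && (i != C))|.
      by apply: eq_card => h; rewrite !inE unfold_in /= inE andbC.
    lia.
  rewrite Hk; lia.
have /andP[RmC _] := lineofP (Rx C CL).
have := s_ge1 RS RmC; have := n_ge5 RS Rh0; lia.
Qed.

Definition Phi := [set m | onl C m && (s m == 5)].

Lemma cover R : R \in S -> exists m, (m \in Phi) && onl R m.
Proof.
move=> RS; case: (boolP (onl R L)) => RL.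
  by exists L; rewrite inE CL HL eqxx RL.
have RC : R != C by apply/eqP => E; move: CS; rewrite -E RS.
have /andP[Rm Cm] := lineofP RC.
by exists (lineof R C); rewrite inE Cm key // eqxx Rm.
Qed.

Lemma Phi_card : #|Phi| = 5.
Proof.
have := dcount S (fun R m => (m \in Phi) && onl R m).
rewrite (eq_bigr (fun _ => 1)); last first.
  move=> R RS; apply/eqP; rewrite eqn_leq; apply/andP; split.
    apply/card_le1_eqP => m1 m2; rewrite !inE => /andP[/andP[C1 _] R1] /andP[/andP[C2 _] R2].
    have RC : R != C by apply/eqP => E; move: CS; rewrite -E RS.
    by have := line_uniq RC R1 C1 R2 C2 => ->.
  have [m Hm] := cover RS; rewrite card_gt0; apply/set0Pn; exists m; rewrite inE //.
rewrite sum1_card HS25.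
rewrite (eq_bigr (fun m => (m \in Phi) * 5)); last first.
  move=> m _; case: (boolP (m \in Phi)) => Hm.
    move: (Hm); rewrite inE => /andP[_ /eqP <-]; rewrite mul1n; apply: eq_card => x.
    by rewrite !inE.
  apply/eqP; rewrite mul0n cards_eq0; apply/eqP/setP => x; rewrite !inE.
  by rewrite andbF.
rewrite -big_distrl /= -card_sumb'.
have -> : #|[set x | x \in Phi]| = #|Phi| by apply: eq_card => x; rewrite inE.
lia.
Qed.

End Full.

Theorem core_main : exists (C : Pt) (ms : 'I_5 -> Ln),
  [/\ injective ms, forall i, onl C (ms i) &
      forall x, (x \in S) = (x != C) && [exists i, onl x (ms i)]].
Proof.
have [L HL] := exists_full.
have [C /andP[CL CS]] := exC HL.
have Hc := Phi_card HL CL CS.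
set P := Phi C in Hc.
exists C, (fun i => enum_val (cast_ord (esym Hc) i)).
split.
- by move=> i j /enum_val_inj /cast_ord_inj.
- move=> i; have := enum_valP (cast_ord (esym Hc) i); rewrite inE => /andP[] //.
- move=> x; apply/idP/idP => [xS|/andP[xC /existsP [i xm]]].
    have xC : x != C by apply/eqP => E; move: CS; rewrite -E xS.
    rewrite xC /=; have [m /andP[mP xm]] := cover HL CL CS xS.
    apply/existsP; exists (cast_ord Hc (enum_rank_in mP m)).
    by rewrite cast_ordK enum_rankK_in.
  have := enum_valP (cast_ord (esym Hc) i); rewrite inE => /andP[Cm /eqP sm].
  exact: (full_pts sm Cm CS xm xC).
Qed.

End Core.

Definition vec := (nat * nat * nat * nat)%type.
Definition PTS : seq vec := [:: (0,0,0,1); (0,0,1,0); (0,0,1,1); (0,0,1,2); (0,0,1,3); (0,0,1,4); (0,1,0,0); (0,1,0,1); (0,1,0,2); (0,1,0,3); (0,1,0,4); (0,1,1,0); (0,1,1,1); (0,1,1,2); (0,1,1,3); (0,1,1,4); (0,1,2,0); (0,1,2,1); (0,1,2,2); (0,1,2,3); (0,1,2,4); (0,1,3,0); (0,1,3,1); (0,1,3,2); (0,1,3,3); (0,1,3,4); (0,1,4,0); (0,1,4,1); (0,1,4,2); (0,1,4,3); (0,1,4,4); (1,0,0,0); (1,0,0,1); (1,0,0,2); (1,0,0,3); (1,0,0,4); (1,0,1,0); (1,0,1,1); (1,0,1,2); (1,0,1,3); (1,0,1,4); (1,0,2,0); (1,0,2,1); (1,0,2,2); (1,0,2,3); (1,0,2,4);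 (1,0,3,0); (1,0,3,1); (1,0,3,2); (1,0,3,3); (1,0,3,4); (1,0,4,0); (1,0,4,1); (1,0,4,2); (1,0,4,3); (1,0,4,4); (1,1,0,0); (1,1,0,1); (1,1,0,2); (1,1,0,3); (1,1,0,4); (1,1,1,0); (1,1,1,1); (1,1,1,2); (1,1,1,3); (1,1,1,4); (1,1,2,0); (1,1,2,1); (1,1,2,2); (1,1,2,3); (1,1,2,4); (1,1,3,0); (1,1,3,1); (1,1,3,2); (1,1,3,3); (1,1,3,4); (1,1,4,0); (1,1,4,1); (1,1,4,2); (1,1,4,3); (1,1,4,4); (1,2,0,0); (1,2,0,1); (1,2,0,2); (1,2,0,3); (1,2,0,4); (1,2,1,0); (1,2,1,1); (1,2,1,2); (1,2,1,3); (1,2,1,4); (1,2,2,0); (1,2,2,1); (1,2,2,2); (1,2,2,3); (1,2,2,4); (1,2,3,0); (1,2,3,1); (1,2,3,2); (1,2,3,3); (1,2,3,4); (1,2,4,0); (1,2,4,1); (1,2,4,2); (1,2,4,3); (1,2,4,4); (1,3,0,0); (1,3,0,1); (1,3,0,2); (1,3,0,3); (1,3,0,4); (1,3,1,0); (1,3,1,1); (1,3,1,2); (1,3,1,3); (1,3,1,4); (1,3,2,0); (1,3,2,1); (1,3,2,2); (1,3,2,3); (1,3,2,4); (1,3,3,0); (1,3,3,1); (1,3,3,2); (1,3,3,3); (1,3,3,4); (1,3,4,0); (1,3,4,1); (1,3,4,2); (1,3,4,3); (1,3,4,4); (1,4,0,0); (1,4,0,1); (1,4,0,2); (1,4,0,3);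 (1,4,0,4); (1,4,1,0); (1,4,1,1); (1,4,1,2); (1,4,1,3); (1,4,1,4); (1,4,2,0); (1,4,2,1); (1,4,2,2); (1,4,2,3); (1,4,2,4); (1,4,3,0); (1,4,3,1); (1,4,3,2); (1,4,3,3); (1,4,3,4); (1,4,4,0); (1,4,4,1); (1,4,4,2); (1,4,4,3); (1,4,4,4)].
Definition LNS : seq (seq vec) := [:: [:: (0,0,0,1); (0,0,1,0); (0,0,1,1); (0,0,1,2); (0,0,1,3); (0,0,1,4)];
 [:: (0,0,0,1); (0,1,0,0); (0,1,0,1); (0,1,0,2); (0,1,0,3); (0,1,0,4)];
 [:: (0,0,0,1); (0,1,1,0); (0,1,1,1); (0,1,1,2); (0,1,1,3); (0,1,1,4)];
 [:: (0,0,0,1); (0,1,2,0); (0,1,2,1); (0,1,2,2); (0,1,2,3); (0,1,2,4)];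
 [:: (0,0,0,1); (0,1,3,0); (0,1,3,1); (0,1,3,2); (0,1,3,3); (0,1,3,4)];
 [:: (0,0,0,1); (0,1,4,0); (0,1,4,1); (0,1,4,2); (0,1,4,3); (0,1,4,4)];
 [:: (0,0,0,1); (1,0,0,0); (1,0,0,1); (1,0,0,2); (1,0,0,3); (1,0,0,4)];
 [:: (0,0,0,1); (1,0,1,0); (1,0,1,1); (1,0,1,2); (1,0,1,3); (1,0,1,4)];
 [:: (0,0,0,1); (1,0,2,0); (1,0,2,1); (1,0,2,2); (1,0,2,3); (1,0,2,4)];
 [:: (0,0,0,1); (1,0,3,0); (1,0,3,1); (1,0,3,2); (1,0,3,3); (1,0,3,4)];
 [:: (0,0,0,1); (1,0,4,0); (1,0,4,1); (1,0,4,2); (1,0,4,3); (1,0,4,4)];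
 [:: (0,0,0,1); (1,1,0,0); (1,1,0,1); (1,1,0,2); (1,1,0,3); (1,1,0,4)];
 [:: (0,0,0,1); (1,1,1,0); (1,1,1,1); (1,1,1,2); (1,1,1,3); (1,1,1,4)];
 [:: (0,0,0,1); (1,1,2,0); (1,1,2,1); (1,1,2,2); (1,1,2,3); (1,1,2,4)];
 [:: (0,0,0,1); (1,1,3,0); (1,1,3,1); (1,1,3,2); (1,1,3,3); (1,1,3,4)];
 [:: (0,0,0,1); (1,1,4,0); (1,1,4,1); (1,1,4,2); (1,1,4,3); (1,1,4,4)];
 [:: (0,0,0,1); (1,2,0,0); (1,2,0,1); (1,2,0,2); (1,2,0,3); (1,2,0,4)];
 [:: (0,0,0,1); (1,2,1,0); (1,2,1,1); (1,2,1,2); (1,2,1,3); (1,2,1,4)];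
 [:: (0,0,0,1); (1,2,2,0); (1,2,2,1); (1,2,2,2); (1,2,2,3); (1,2,2,4)];
 [:: (0,0,0,1); (1,2,3,0); (1,2,3,1); (1,2,3,2); (1,2,3,3); (1,2,3,4)];
 [:: (0,0,0,1); (1,2,4,0); (1,2,4,1); (1,2,4,2); (1,2,4,3); (1,2,4,4)];
 [:: (0,0,0,1); (1,3,0,0); (1,3,0,1); (1,3,0,2); (1,3,0,3); (1,3,0,4)];
 [:: (0,0,0,1); (1,3,1,0); (1,3,1,1); (1,3,1,2); (1,3,1,3); (1,3,1,4)];
 [:: (0,0,0,1); (1,3,2,0); (1,3,2,1); (1,3,2,2); (1,3,2,3); (1,3,2,4)];
 [:: (0,0,0,1); (1,3,3,0); (1,3,3,1); (1,3,3,2); (1,3,3,3); (1,3,3,4)];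
 [:: (0,0,0,1); (1,3,4,0); (1,3,4,1); (1,3,4,2); (1,3,4,3); (1,3,4,4)];
 [:: (0,0,0,1); (1,4,0,0); (1,4,0,1); (1,4,0,2); (1,4,0,3); (1,4,0,4)];
 [:: (0,0,0,1); (1,4,1,0); (1,4,1,1); (1,4,1,2); (1,4,1,3); (1,4,1,4)];
 [:: (0,0,0,1); (1,4,2,0); (1,4,2,1); (1,4,2,2); (1,4,2,3); (1,4,2,4)];
 [:: (0,0,0,1); (1,4,3,0); (1,4,3,1); (1,4,3,2); (1,4,3,3); (1,4,3,4)];
 [:: (0,0,0,1); (1,4,4,0); (1,4,4,1); (1,4,4,2); (1,4,4,3); (1,4,4,4)];
 [:: (0,0,1,0); (0,1,0,0); (0,1,1,0); (0,1,2,0); (0,1,3,0); (0,1,4,0)];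
 [:: (0,0,1,0); (0,1,0,1); (0,1,1,1); (0,1,2,1); (0,1,3,1); (0,1,4,1)];
 [:: (0,0,1,0); (0,1,0,2); (0,1,1,2); (0,1,2,2); (0,1,3,2); (0,1,4,2)];
 [:: (0,0,1,0); (0,1,0,3); (0,1,1,3); (0,1,2,3); (0,1,3,3); (0,1,4,3)];
 [:: (0,0,1,0); (0,1,0,4); (0,1,1,4); (0,1,2,4); (0,1,3,4); (0,1,4,4)];
 [:: (0,0,1,0); (1,0,0,0); (1,0,1,0); (1,0,2,0); (1,0,3,0); (1,0,4,0)];
 [:: (0,0,1,0); (1,0,0,1); (1,0,1,1); (1,0,2,1); (1,0,3,1); (1,0,4,1)];
 [:: (0,0,1,0); (1,0,0,2); (1,0,1,2); (1,0,2,2); (1,0,3,2); (1,0,4,2)];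
 [:: (0,0,1,0); (1,0,0,3); (1,0,1,3); (1,0,2,3); (1,0,3,3); (1,0,4,3)];
 [:: (0,0,1,0); (1,0,0,4); (1,0,1,4); (1,0,2,4); (1,0,3,4); (1,0,4,4)];
 [:: (0,0,1,0); (1,1,0,0); (1,1,1,0); (1,1,2,0); (1,1,3,0); (1,1,4,0)];
 [:: (0,0,1,0); (1,1,0,1); (1,1,1,1); (1,1,2,1); (1,1,3,1); (1,1,4,1)];
 [:: (0,0,1,0); (1,1,0,2); (1,1,1,2); (1,1,2,2); (1,1,3,2); (1,1,4,2)];
 [:: (0,0,1,0); (1,1,0,3); (1,1,1,3); (1,1,2,3); (1,1,3,3); (1,1,4,3)];
 [:: (0,0,1,0); (1,1,0,4); (1,1,1,4); (1,1,2,4); (1,1,3,4); (1,1,4,4)];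
 [:: (0,0,1,0); (1,2,0,0); (1,2,1,0); (1,2,2,0); (1,2,3,0); (1,2,4,0)];
 [:: (0,0,1,0); (1,2,0,1); (1,2,1,1); (1,2,2,1); (1,2,3,1); (1,2,4,1)];
 [:: (0,0,1,0); (1,2,0,2); (1,2,1,2); (1,2,2,2); (1,2,3,2); (1,2,4,2)];
 [:: (0,0,1,0); (1,2,0,3); (1,2,1,3); (1,2,2,3); (1,2,3,3); (1,2,4,3)];
 [:: (0,0,1,0); (1,2,0,4); (1,2,1,4); (1,2,2,4); (1,2,3,4); (1,2,4,4)];
 [:: (0,0,1,0); (1,3,0,0); (1,3,1,0); (1,3,2,0); (1,3,3,0); (1,3,4,0)];
 [:: (0,0,1,0); (1,3,0,1); (1,3,1,1); (1,3,2,1); (1,3,3,1); (1,3,4,1)];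
 [:: (0,0,1,0); (1,3,0,2); (1,3,1,2); (1,3,2,2); (1,3,3,2); (1,3,4,2)];
 [:: (0,0,1,0); (1,3,0,3); (1,3,1,3); (1,3,2,3); (1,3,3,3); (1,3,4,3)];
 [:: (0,0,1,0); (1,3,0,4); (1,3,1,4); (1,3,2,4); (1,3,3,4); (1,3,4,4)];
 [:: (0,0,1,0); (1,4,0,0); (1,4,1,0); (1,4,2,0); (1,4,3,0); (1,4,4,0)];
 [:: (0,0,1,0); (1,4,0,1); (1,4,1,1); (1,4,2,1); (1,4,3,1); (1,4,4,1)];
 [:: (0,0,1,0); (1,4,0,2); (1,4,1,2); (1,4,2,2); (1,4,3,2); (1,4,4,2)];
 [:: (0,0,1,0); (1,4,0,3); (1,4,1,3); (1,4,2,3); (1,4,3,3); (1,4,4,3)];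
 [:: (0,0,1,0); (1,4,0,4); (1,4,1,4); (1,4,2,4); (1,4,3,4); (1,4,4,4)];
 [:: (0,0,1,1); (0,1,0,0); (0,1,1,1); (0,1,2,2); (0,1,3,3); (0,1,4,4)];
 [:: (0,0,1,1); (0,1,0,1); (0,1,1,2); (0,1,2,3); (0,1,3,4); (0,1,4,0)];
 [:: (0,0,1,1); (0,1,0,2); (0,1,1,3); (0,1,2,4); (0,1,3,0); (0,1,4,1)];
 [:: (0,0,1,1); (0,1,0,3); (0,1,1,4); (0,1,2,0); (0,1,3,1); (0,1,4,2)];
 [:: (0,0,1,1); (0,1,0,4); (0,1,1,0); (0,1,2,1); (0,1,3,2); (0,1,4,3)];
 [:: (0,0,1,1); (1,0,0,0); (1,0,1,1); (1,0,2,2); (1,0,3,3); (1,0,4,4)];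
 [:: (0,0,1,1); (1,0,0,1); (1,0,1,2); (1,0,2,3); (1,0,3,4); (1,0,4,0)];
 [:: (0,0,1,1); (1,0,0,2); (1,0,1,3); (1,0,2,4); (1,0,3,0); (1,0,4,1)];
 [:: (0,0,1,1); (1,0,0,3); (1,0,1,4); (1,0,2,0); (1,0,3,1); (1,0,4,2)];
 [:: (0,0,1,1); (1,0,0,4); (1,0,1,0); (1,0,2,1); (1,0,3,2); (1,0,4,3)];
 [:: (0,0,1,1); (1,1,0,0); (1,1,1,1); (1,1,2,2); (1,1,3,3); (1,1,4,4)];
 [:: (0,0,1,1); (1,1,0,1); (1,1,1,2); (1,1,2,3); (1,1,3,4); (1,1,4,0)];
 [:: (0,0,1,1); (1,1,0,2); (1,1,1,3); (1,1,2,4); (1,1,3,0); (1,1,4,1)];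
 [:: (0,0,1,1); (1,1,0,3); (1,1,1,4); (1,1,2,0); (1,1,3,1); (1,1,4,2)];
 [:: (0,0,1,1); (1,1,0,4); (1,1,1,0); (1,1,2,1); (1,1,3,2); (1,1,4,3)];
 [:: (0,0,1,1); (1,2,0,0); (1,2,1,1); (1,2,2,2); (1,2,3,3); (1,2,4,4)];
 [:: (0,0,1,1); (1,2,0,1); (1,2,1,2); (1,2,2,3); (1,2,3,4); (1,2,4,0)];
 [:: (0,0,1,1); (1,2,0,2); (1,2,1,3); (1,2,2,4); (1,2,3,0); (1,2,4,1)];
 [:: (0,0,1,1); (1,2,0,3); (1,2,1,4); (1,2,2,0); (1,2,3,1); (1,2,4,2)];
 [:: (0,0,1,1); (1,2,0,4); (1,2,1,0); (1,2,2,1); (1,2,3,2); (1,2,4,3)];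
 [:: (0,0,1,1); (1,3,0,0); (1,3,1,1); (1,3,2,2); (1,3,3,3); (1,3,4,4)];
 [:: (0,0,1,1); (1,3,0,1); (1,3,1,2); (1,3,2,3); (1,3,3,4); (1,3,4,0)];
 [:: (0,0,1,1); (1,3,0,2); (1,3,1,3); (1,3,2,4); (1,3,3,0); (1,3,4,1)];
 [:: (0,0,1,1); (1,3,0,3); (1,3,1,4); (1,3,2,0); (1,3,3,1); (1,3,4,2)];
 [:: (0,0,1,1); (1,3,0,4); (1,3,1,0); (1,3,2,1); (1,3,3,2); (1,3,4,3)];
 [:: (0,0,1,1); (1,4,0,0); (1,4,1,1); (1,4,2,2); (1,4,3,3); (1,4,4,4)];
 [:: (0,0,1,1); (1,4,0,1); (1,4,1,2); (1,4,2,3); (1,4,3,4); (1,4,4,0)];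
 [:: (0,0,1,1); (1,4,0,2); (1,4,1,3); (1,4,2,4); (1,4,3,0); (1,4,4,1)];
 [:: (0,0,1,1); (1,4,0,3); (1,4,1,4); (1,4,2,0); (1,4,3,1); (1,4,4,2)];
 [:: (0,0,1,1); (1,4,0,4); (1,4,1,0); (1,4,2,1); (1,4,3,2); (1,4,4,3)];
 [:: (0,0,1,2); (0,1,0,0); (0,1,1,2); (0,1,2,4); (0,1,3,1); (0,1,4,3)];
 [:: (0,0,1,2); (0,1,0,1); (0,1,1,3); (0,1,2,0); (0,1,3,2); (0,1,4,4)];
 [:: (0,0,1,2); (0,1,0,2); (0,1,1,4); (0,1,2,1); (0,1,3,3); (0,1,4,0)];
 [:: (0,0,1,2); (0,1,0,3); (0,1,1,0); (0,1,2,2); (0,1,3,4); (0,1,4,1)];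
 [:: (0,0,1,2); (0,1,0,4); (0,1,1,1); (0,1,2,3); (0,1,3,0); (0,1,4,2)];
 [:: (0,0,1,2); (1,0,0,0); (1,0,1,2); (1,0,2,4); (1,0,3,1); (1,0,4,3)];
 [:: (0,0,1,2); (1,0,0,1); (1,0,1,3); (1,0,2,0); (1,0,3,2); (1,0,4,4)];
 [:: (0,0,1,2); (1,0,0,2); (1,0,1,4); (1,0,2,1); (1,0,3,3); (1,0,4,0)];
 [:: (0,0,1,2); (1,0,0,3); (1,0,1,0); (1,0,2,2); (1,0,3,4); (1,0,4,1)];
 [:: (0,0,1,2); (1,0,0,4); (1,0,1,1); (1,0,2,3); (1,0,3,0); (1,0,4,2)];
 [:: (0,0,1,2); (1,1,0,0); (1,1,1,2); (1,1,2,4); (1,1,3,1); (1,1,4,3)];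
 [:: (0,0,1,2); (1,1,0,1); (1,1,1,3); (1,1,2,0); (1,1,3,2); (1,1,4,4)];
 [:: (0,0,1,2); (1,1,0,2); (1,1,1,4); (1,1,2,1); (1,1,3,3); (1,1,4,0)];
 [:: (0,0,1,2); (1,1,0,3); (1,1,1,0); (1,1,2,2); (1,1,3,4); (1,1,4,1)];
 [:: (0,0,1,2); (1,1,0,4); (1,1,1,1); (1,1,2,3); (1,1,3,0); (1,1,4,2)];
 [:: (0,0,1,2); (1,2,0,0); (1,2,1,2); (1,2,2,4); (1,2,3,1); (1,2,4,3)];
 [:: (0,0,1,2); (1,2,0,1); (1,2,1,3); (1,2,2,0); (1,2,3,2); (1,2,4,4)];
 [:: (0,0,1,2); (1,2,0,2); (1,2,1,4); (1,2,2,1); (1,2,3,3); (1,2,4,0)];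
 [:: (0,0,1,2); (1,2,0,3); (1,2,1,0); (1,2,2,2); (1,2,3,4); (1,2,4,1)];
 [:: (0,0,1,2); (1,2,0,4); (1,2,1,1); (1,2,2,3); (1,2,3,0); (1,2,4,2)];
 [:: (0,0,1,2); (1,3,0,0); (1,3,1,2); (1,3,2,4); (1,3,3,1); (1,3,4,3)];
 [:: (0,0,1,2); (1,3,0,1); (1,3,1,3); (1,3,2,0); (1,3,3,2); (1,3,4,4)];
 [:: (0,0,1,2); (1,3,0,2); (1,3,1,4); (1,3,2,1); (1,3,3,3); (1,3,4,0)];
 [:: (0,0,1,2); (1,3,0,3); (1,3,1,0); (1,3,2,2); (1,3,3,4); (1,3,4,1)];
 [:: (0,0,1,2); (1,3,0,4); (1,3,1,1); (1,3,2,3); (1,3,3,0); (1,3,4,2)];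
 [:: (0,0,1,2); (1,4,0,0); (1,4,1,2); (1,4,2,4); (1,4,3,1); (1,4,4,3)];
 [:: (0,0,1,2); (1,4,0,1); (1,4,1,3); (1,4,2,0); (1,4,3,2); (1,4,4,4)];
 [:: (0,0,1,2); (1,4,0,2); (1,4,1,4); (1,4,2,1); (1,4,3,3); (1,4,4,0)];
 [:: (0,0,1,2); (1,4,0,3); (1,4,1,0); (1,4,2,2); (1,4,3,4); (1,4,4,1)];
 [:: (0,0,1,2); (1,4,0,4); (1,4,1,1); (1,4,2,3); (1,4,3,0); (1,4,4,2)];
 [:: (0,0,1,3); (0,1,0,0); (0,1,1,3); (0,1,2,1); (0,1,3,4); (0,1,4,2)];
 [:: (0,0,1,3); (0,1,0,1); (0,1,1,4); (0,1,2,2); (0,1,3,0); (0,1,4,3)];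
 [:: (0,0,1,3); (0,1,0,2); (0,1,1,0); (0,1,2,3); (0,1,3,1); (0,1,4,4)];
 [:: (0,0,1,3); (0,1,0,3); (0,1,1,1); (0,1,2,4); (0,1,3,2); (0,1,4,0)];
 [:: (0,0,1,3); (0,1,0,4); (0,1,1,2); (0,1,2,0); (0,1,3,3); (0,1,4,1)];
 [:: (0,0,1,3); (1,0,0,0); (1,0,1,3); (1,0,2,1); (1,0,3,4); (1,0,4,2)];
 [:: (0,0,1,3); (1,0,0,1); (1,0,1,4); (1,0,2,2); (1,0,3,0); (1,0,4,3)];
 [:: (0,0,1,3); (1,0,0,2); (1,0,1,0); (1,0,2,3); (1,0,3,1); (1,0,4,4)];
 [:: (0,0,1,3); (1,0,0,3); (1,0,1,1); (1,0,2,4); (1,0,3,2); (1,0,4,0)];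
 [:: (0,0,1,3); (1,0,0,4); (1,0,1,2); (1,0,2,0); (1,0,3,3); (1,0,4,1)];
 [:: (0,0,1,3); (1,1,0,0); (1,1,1,3); (1,1,2,1); (1,1,3,4); (1,1,4,2)];
 [:: (0,0,1,3); (1,1,0,1); (1,1,1,4); (1,1,2,2); (1,1,3,0); (1,1,4,3)];
 [:: (0,0,1,3); (1,1,0,2); (1,1,1,0); (1,1,2,3); (1,1,3,1); (1,1,4,4)];
 [:: (0,0,1,3); (1,1,0,3); (1,1,1,1); (1,1,2,4); (1,1,3,2); (1,1,4,0)];
 [:: (0,0,1,3); (1,1,0,4); (1,1,1,2); (1,1,2,0); (1,1,3,3); (1,1,4,1)];
 [:: (0,0,1,3); (1,2,0,0); (1,2,1,3); (1,2,2,1); (1,2,3,4); (1,2,4,2)];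
 [:: (0,0,1,3); (1,2,0,1); (1,2,1,4); (1,2,2,2); (1,2,3,0); (1,2,4,3)];
 [:: (0,0,1,3); (1,2,0,2); (1,2,1,0); (1,2,2,3); (1,2,3,1); (1,2,4,4)];
 [:: (0,0,1,3); (1,2,0,3); (1,2,1,1); (1,2,2,4); (1,2,3,2); (1,2,4,0)];
 [:: (0,0,1,3); (1,2,0,4); (1,2,1,2); (1,2,2,0); (1,2,3,3); (1,2,4,1)];
 [:: (0,0,1,3); (1,3,0,0); (1,3,1,3); (1,3,2,1); (1,3,3,4); (1,3,4,2)];
 [:: (0,0,1,3); (1,3,0,1); (1,3,1,4); (1,3,2,2); (1,3,3,0); (1,3,4,3)];
 [:: (0,0,1,3); (1,3,0,2); (1,3,1,0); (1,3,2,3); (1,3,3,1); (1,3,4,4)];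
 [:: (0,0,1,3); (1,3,0,3); (1,3,1,1); (1,3,2,4); (1,3,3,2); (1,3,4,0)];
 [:: (0,0,1,3); (1,3,0,4); (1,3,1,2); (1,3,2,0); (1,3,3,3); (1,3,4,1)];
 [:: (0,0,1,3); (1,4,0,0); (1,4,1,3); (1,4,2,1); (1,4,3,4); (1,4,4,2)];
 [:: (0,0,1,3); (1,4,0,1); (1,4,1,4); (1,4,2,2); (1,4,3,0); (1,4,4,3)];
 [:: (0,0,1,3); (1,4,0,2); (1,4,1,0); (1,4,2,3); (1,4,3,1); (1,4,4,4)];
 [:: (0,0,1,3); (1,4,0,3); (1,4,1,1); (1,4,2,4); (1,4,3,2); (1,4,4,0)];
 [:: (0,0,1,3); (1,4,0,4); (1,4,1,2); (1,4,2,0); (1,4,3,3); (1,4,4,1)];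
 [:: (0,0,1,4); (0,1,0,0); (0,1,1,4); (0,1,2,3); (0,1,3,2); (0,1,4,1)];
 [:: (0,0,1,4); (0,1,0,1); (0,1,1,0); (0,1,2,4); (0,1,3,3); (0,1,4,2)];
 [:: (0,0,1,4); (0,1,0,2); (0,1,1,1); (0,1,2,0); (0,1,3,4); (0,1,4,3)];
 [:: (0,0,1,4); (0,1,0,3); (0,1,1,2); (0,1,2,1); (0,1,3,0); (0,1,4,4)];
 [:: (0,0,1,4); (0,1,0,4); (0,1,1,3); (0,1,2,2); (0,1,3,1); (0,1,4,0)];
 [:: (0,0,1,4); (1,0,0,0); (1,0,1,4); (1,0,2,3); (1,0,3,2); (1,0,4,1)];
 [:: (0,0,1,4); (1,0,0,1); (1,0,1,0); (1,0,2,4); (1,0,3,3); (1,0,4,2)];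
 [:: (0,0,1,4); (1,0,0,2); (1,0,1,1); (1,0,2,0); (1,0,3,4); (1,0,4,3)];
 [:: (0,0,1,4); (1,0,0,3); (1,0,1,2); (1,0,2,1); (1,0,3,0); (1,0,4,4)];
 [:: (0,0,1,4); (1,0,0,4); (1,0,1,3); (1,0,2,2); (1,0,3,1); (1,0,4,0)];
 [:: (0,0,1,4); (1,1,0,0); (1,1,1,4); (1,1,2,3); (1,1,3,2); (1,1,4,1)];
 [:: (0,0,1,4); (1,1,0,1); (1,1,1,0); (1,1,2,4); (1,1,3,3); (1,1,4,2)];
 [:: (0,0,1,4); (1,1,0,2); (1,1,1,1); (1,1,2,0); (1,1,3,4); (1,1,4,3)];
 [:: (0,0,1,4); (1,1,0,3); (1,1,1,2); (1,1,2,1); (1,1,3,0); (1,1,4,4)];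
 [:: (0,0,1,4); (1,1,0,4); (1,1,1,3); (1,1,2,2); (1,1,3,1); (1,1,4,0)];
 [:: (0,0,1,4); (1,2,0,0); (1,2,1,4); (1,2,2,3); (1,2,3,2); (1,2,4,1)];
 [:: (0,0,1,4); (1,2,0,1); (1,2,1,0); (1,2,2,4); (1,2,3,3); (1,2,4,2)];
 [:: (0,0,1,4); (1,2,0,2); (1,2,1,1); (1,2,2,0); (1,2,3,4); (1,2,4,3)];
 [:: (0,0,1,4); (1,2,0,3); (1,2,1,2); (1,2,2,1); (1,2,3,0); (1,2,4,4)];
 [:: (0,0,1,4); (1,2,0,4); (1,2,1,3); (1,2,2,2); (1,2,3,1); (1,2,4,0)];
 [:: (0,0,1,4); (1,3,0,0); (1,3,1,4); (1,3,2,3); (1,3,3,2); (1,3,4,1)];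
 [:: (0,0,1,4); (1,3,0,1); (1,3,1,0); (1,3,2,4); (1,3,3,3); (1,3,4,2)];
 [:: (0,0,1,4); (1,3,0,2); (1,3,1,1); (1,3,2,0); (1,3,3,4); (1,3,4,3)];
 [:: (0,0,1,4); (1,3,0,3); (1,3,1,2); (1,3,2,1); (1,3,3,0); (1,3,4,4)];
 [:: (0,0,1,4); (1,3,0,4); (1,3,1,3); (1,3,2,2); (1,3,3,1); (1,3,4,0)];
 [:: (0,0,1,4); (1,4,0,0); (1,4,1,4); (1,4,2,3); (1,4,3,2); (1,4,4,1)];
 [:: (0,0,1,4); (1,4,0,1); (1,4,1,0); (1,4,2,4); (1,4,3,3); (1,4,4,2)];
 [:: (0,0,1,4); (1,4,0,2); (1,4,1,1); (1,4,2,0); (1,4,3,4); (1,4,4,3)];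
 [:: (0,0,1,4); (1,4,0,3); (1,4,1,2); (1,4,2,1); (1,4,3,0); (1,4,4,4)];
 [:: (0,0,1,4); (1,4,0,4); (1,4,1,3); (1,4,2,2); (1,4,3,1); (1,4,4,0)];
 [:: (0,1,0,0); (1,0,0,0); (1,1,0,0); (1,2,0,0); (1,3,0,0); (1,4,0,0)];
 [:: (0,1,0,0); (1,0,0,1); (1,1,0,1); (1,2,0,1); (1,3,0,1); (1,4,0,1)];
 [:: (0,1,0,0); (1,0,0,2); (1,1,0,2); (1,2,0,2); (1,3,0,2); (1,4,0,2)];
 [:: (0,1,0,0); (1,0,0,3); (1,1,0,3); (1,2,0,3); (1,3,0,3); (1,4,0,3)];
 [:: (0,1,0,0); (1,0,0,4); (1,1,0,4); (1,2,0,4); (1,3,0,4); (1,4,0,4)];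
 [:: (0,1,0,0); (1,0,1,0); (1,1,1,0); (1,2,1,0); (1,3,1,0); (1,4,1,0)];
 [:: (0,1,0,0); (1,0,1,1); (1,1,1,1); (1,2,1,1); (1,3,1,1); (1,4,1,1)];
 [:: (0,1,0,0); (1,0,1,2); (1,1,1,2); (1,2,1,2); (1,3,1,2); (1,4,1,2)];
 [:: (0,1,0,0); (1,0,1,3); (1,1,1,3); (1,2,1,3); (1,3,1,3); (1,4,1,3)];
 [:: (0,1,0,0); (1,0,1,4); (1,1,1,4); (1,2,1,4); (1,3,1,4); (1,4,1,4)];
 [:: (0,1,0,0); (1,0,2,0); (1,1,2,0); (1,2,2,0); (1,3,2,0); (1,4,2,0)];
 [:: (0,1,0,0); (1,0,2,1); (1,1,2,1); (1,2,2,1); (1,3,2,1); (1,4,2,1)];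
 [:: (0,1,0,0); (1,0,2,2); (1,1,2,2); (1,2,2,2); (1,3,2,2); (1,4,2,2)];
 [:: (0,1,0,0); (1,0,2,3); (1,1,2,3); (1,2,2,3); (1,3,2,3); (1,4,2,3)];
 [:: (0,1,0,0); (1,0,2,4); (1,1,2,4); (1,2,2,4); (1,3,2,4); (1,4,2,4)];
 [:: (0,1,0,0); (1,0,3,0); (1,1,3,0); (1,2,3,0); (1,3,3,0); (1,4,3,0)];
 [:: (0,1,0,0); (1,0,3,1); (1,1,3,1); (1,2,3,1); (1,3,3,1); (1,4,3,1)];
 [:: (0,1,0,0); (1,0,3,2); (1,1,3,2); (1,2,3,2); (1,3,3,2); (1,4,3,2)];
 [:: (0,1,0,0); (1,0,3,3); (1,1,3,3); (1,2,3,3); (1,3,3,3); (1,4,3,3)];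
 [:: (0,1,0,0); (1,0,3,4); (1,1,3,4); (1,2,3,4); (1,3,3,4); (1,4,3,4)];
 [:: (0,1,0,0); (1,0,4,0); (1,1,4,0); (1,2,4,0); (1,3,4,0); (1,4,4,0)];
 [:: (0,1,0,0); (1,0,4,1); (1,1,4,1); (1,2,4,1); (1,3,4,1); (1,4,4,1)];
 [:: (0,1,0,0); (1,0,4,2); (1,1,4,2); (1,2,4,2); (1,3,4,2); (1,4,4,2)];
 [:: (0,1,0,0); (1,0,4,3); (1,1,4,3); (1,2,4,3); (1,3,4,3); (1,4,4,3)];
 [:: (0,1,0,0); (1,0,4,4); (1,1,4,4); (1,2,4,4); (1,3,4,4); (1,4,4,4)];
 [:: (0,1,0,1); (1,0,0,0); (1,1,0,1); (1,2,0,2); (1,3,0,3); (1,4,0,4)];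
 [:: (0,1,0,1); (1,0,0,1); (1,1,0,2); (1,2,0,3); (1,3,0,4); (1,4,0,0)];
 [:: (0,1,0,1); (1,0,0,2); (1,1,0,3); (1,2,0,4); (1,3,0,0); (1,4,0,1)];
 [:: (0,1,0,1); (1,0,0,3); (1,1,0,4); (1,2,0,0); (1,3,0,1); (1,4,0,2)];
 [:: (0,1,0,1); (1,0,0,4); (1,1,0,0); (1,2,0,1); (1,3,0,2); (1,4,0,3)];
 [:: (0,1,0,1); (1,0,1,0); (1,1,1,1); (1,2,1,2); (1,3,1,3); (1,4,1,4)];
 [:: (0,1,0,1); (1,0,1,1); (1,1,1,2); (1,2,1,3); (1,3,1,4); (1,4,1,0)];
 [:: (0,1,0,1); (1,0,1,2); (1,1,1,3); (1,2,1,4); (1,3,1,0); (1,4,1,1)];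
 [:: (0,1,0,1); (1,0,1,3); (1,1,1,4); (1,2,1,0); (1,3,1,1); (1,4,1,2)];
 [:: (0,1,0,1); (1,0,1,4); (1,1,1,0); (1,2,1,1); (1,3,1,2); (1,4,1,3)];
 [:: (0,1,0,1); (1,0,2,0); (1,1,2,1); (1,2,2,2); (1,3,2,3); (1,4,2,4)];
 [:: (0,1,0,1); (1,0,2,1); (1,1,2,2); (1,2,2,3); (1,3,2,4); (1,4,2,0)];
 [:: (0,1,0,1); (1,0,2,2); (1,1,2,3); (1,2,2,4); (1,3,2,0); (1,4,2,1)];
 [:: (0,1,0,1); (1,0,2,3); (1,1,2,4); (1,2,2,0); (1,3,2,1); (1,4,2,2)];
 [:: (0,1,0,1); (1,0,2,4); (1,1,2,0); (1,2,2,1); (1,3,2,2); (1,4,2,3)];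
 [:: (0,1,0,1); (1,0,3,0); (1,1,3,1); (1,2,3,2); (1,3,3,3); (1,4,3,4)];
 [:: (0,1,0,1); (1,0,3,1); (1,1,3,2); (1,2,3,3); (1,3,3,4); (1,4,3,0)];
 [:: (0,1,0,1); (1,0,3,2); (1,1,3,3); (1,2,3,4); (1,3,3,0); (1,4,3,1)];
 [:: (0,1,0,1); (1,0,3,3); (1,1,3,4); (1,2,3,0); (1,3,3,1); (1,4,3,2)];
 [:: (0,1,0,1); (1,0,3,4); (1,1,3,0); (1,2,3,1); (1,3,3,2); (1,4,3,3)];
 [:: (0,1,0,1); (1,0,4,0); (1,1,4,1); (1,2,4,2); (1,3,4,3); (1,4,4,4)];
 [:: (0,1,0,1); (1,0,4,1); (1,1,4,2); (1,2,4,3); (1,3,4,4); (1,4,4,0)];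
 [:: (0,1,0,1); (1,0,4,2); (1,1,4,3); (1,2,4,4); (1,3,4,0); (1,4,4,1)];
 [:: (0,1,0,1); (1,0,4,3); (1,1,4,4); (1,2,4,0); (1,3,4,1); (1,4,4,2)];
 [:: (0,1,0,1); (1,0,4,4); (1,1,4,0); (1,2,4,1); (1,3,4,2); (1,4,4,3)];
 [:: (0,1,0,2); (1,0,0,0); (1,1,0,2); (1,2,0,4); (1,3,0,1); (1,4,0,3)];
 [:: (0,1,0,2); (1,0,0,1); (1,1,0,3); (1,2,0,0); (1,3,0,2); (1,4,0,4)];
 [:: (0,1,0,2); (1,0,0,2); (1,1,0,4); (1,2,0,1); (1,3,0,3); (1,4,0,0)];
 [:: (0,1,0,2); (1,0,0,3); (1,1,0,0); (1,2,0,2); (1,3,0,4); (1,4,0,1)];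
 [:: (0,1,0,2); (1,0,0,4); (1,1,0,1); (1,2,0,3); (1,3,0,0); (1,4,0,2)];
 [:: (0,1,0,2); (1,0,1,0); (1,1,1,2); (1,2,1,4); (1,3,1,1); (1,4,1,3)];
 [:: (0,1,0,2); (1,0,1,1); (1,1,1,3); (1,2,1,0); (1,3,1,2); (1,4,1,4)];
 [:: (0,1,0,2); (1,0,1,2); (1,1,1,4); (1,2,1,1); (1,3,1,3); (1,4,1,0)];
 [:: (0,1,0,2); (1,0,1,3); (1,1,1,0); (1,2,1,2); (1,3,1,4); (1,4,1,1)];
 [:: (0,1,0,2); (1,0,1,4); (1,1,1,1); (1,2,1,3); (1,3,1,0); (1,4,1,2)];
 [:: (0,1,0,2); (1,0,2,0); (1,1,2,2); (1,2,2,4); (1,3,2,1); (1,4,2,3)];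
 [:: (0,1,0,2); (1,0,2,1); (1,1,2,3); (1,2,2,0); (1,3,2,2); (1,4,2,4)];
 [:: (0,1,0,2); (1,0,2,2); (1,1,2,4); (1,2,2,1); (1,3,2,3); (1,4,2,0)];
 [:: (0,1,0,2); (1,0,2,3); (1,1,2,0); (1,2,2,2); (1,3,2,4); (1,4,2,1)];
 [:: (0,1,0,2); (1,0,2,4); (1,1,2,1); (1,2,2,3); (1,3,2,0); (1,4,2,2)];
 [:: (0,1,0,2); (1,0,3,0); (1,1,3,2); (1,2,3,4); (1,3,3,1); (1,4,3,3)];
 [:: (0,1,0,2); (1,0,3,1); (1,1,3,3); (1,2,3,0); (1,3,3,2); (1,4,3,4)];
 [:: (0,1,0,2); (1,0,3,2); (1,1,3,4); (1,2,3,1); (1,3,3,3); (1,4,3,0)];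
 [:: (0,1,0,2); (1,0,3,3); (1,1,3,0); (1,2,3,2); (1,3,3,4); (1,4,3,1)];
 [:: (0,1,0,2); (1,0,3,4); (1,1,3,1); (1,2,3,3); (1,3,3,0); (1,4,3,2)];
 [:: (0,1,0,2); (1,0,4,0); (1,1,4,2); (1,2,4,4); (1,3,4,1); (1,4,4,3)];
 [:: (0,1,0,2); (1,0,4,1); (1,1,4,3); (1,2,4,0); (1,3,4,2); (1,4,4,4)];
 [:: (0,1,0,2); (1,0,4,2); (1,1,4,4); (1,2,4,1); (1,3,4,3); (1,4,4,0)];
 [:: (0,1,0,2); (1,0,4,3); (1,1,4,0); (1,2,4,2); (1,3,4,4); (1,4,4,1)];
 [:: (0,1,0,2); (1,0,4,4); (1,1,4,1); (1,2,4,3); (1,3,4,0); (1,4,4,2)];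
 [:: (0,1,0,3); (1,0,0,0); (1,1,0,3); (1,2,0,1); (1,3,0,4); (1,4,0,2)];
 [:: (0,1,0,3); (1,0,0,1); (1,1,0,4); (1,2,0,2); (1,3,0,0); (1,4,0,3)];
 [:: (0,1,0,3); (1,0,0,2); (1,1,0,0); (1,2,0,3); (1,3,0,1); (1,4,0,4)];
 [:: (0,1,0,3); (1,0,0,3); (1,1,0,1); (1,2,0,4); (1,3,0,2); (1,4,0,0)];
 [:: (0,1,0,3); (1,0,0,4); (1,1,0,2); (1,2,0,0); (1,3,0,3); (1,4,0,1)];
 [:: (0,1,0,3); (1,0,1,0); (1,1,1,3); (1,2,1,1); (1,3,1,4); (1,4,1,2)];
 [:: (0,1,0,3); (1,0,1,1); (1,1,1,4); (1,2,1,2); (1,3,1,0); (1,4,1,3)];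
 [:: (0,1,0,3); (1,0,1,2); (1,1,1,0); (1,2,1,3); (1,3,1,1); (1,4,1,4)];
 [:: (0,1,0,3); (1,0,1,3); (1,1,1,1); (1,2,1,4); (1,3,1,2); (1,4,1,0)];
 [:: (0,1,0,3); (1,0,1,4); (1,1,1,2); (1,2,1,0); (1,3,1,3); (1,4,1,1)];
 [:: (0,1,0,3); (1,0,2,0); (1,1,2,3); (1,2,2,1); (1,3,2,4); (1,4,2,2)];
 [:: (0,1,0,3); (1,0,2,1); (1,1,2,4); (1,2,2,2); (1,3,2,0); (1,4,2,3)];
 [:: (0,1,0,3); (1,0,2,2); (1,1,2,0); (1,2,2,3); (1,3,2,1); (1,4,2,4)];
 [:: (0,1,0,3); (1,0,2,3); (1,1,2,1); (1,2,2,4); (1,3,2,2); (1,4,2,0)];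
 [:: (0,1,0,3); (1,0,2,4); (1,1,2,2); (1,2,2,0); (1,3,2,3); (1,4,2,1)];
 [:: (0,1,0,3); (1,0,3,0); (1,1,3,3); (1,2,3,1); (1,3,3,4); (1,4,3,2)];
 [:: (0,1,0,3); (1,0,3,1); (1,1,3,4); (1,2,3,2); (1,3,3,0); (1,4,3,3)];
 [:: (0,1,0,3); (1,0,3,2); (1,1,3,0); (1,2,3,3); (1,3,3,1); (1,4,3,4)];
 [:: (0,1,0,3); (1,0,3,3); (1,1,3,1); (1,2,3,4); (1,3,3,2); (1,4,3,0)];
 [:: (0,1,0,3); (1,0,3,4); (1,1,3,2); (1,2,3,0); (1,3,3,3); (1,4,3,1)];
 [:: (0,1,0,3); (1,0,4,0); (1,1,4,3); (1,2,4,1); (1,3,4,4); (1,4,4,2)];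
 [:: (0,1,0,3); (1,0,4,1); (1,1,4,4); (1,2,4,2); (1,3,4,0); (1,4,4,3)];
 [:: (0,1,0,3); (1,0,4,2); (1,1,4,0); (1,2,4,3); (1,3,4,1); (1,4,4,4)];
 [:: (0,1,0,3); (1,0,4,3); (1,1,4,1); (1,2,4,4); (1,3,4,2); (1,4,4,0)];
 [:: (0,1,0,3); (1,0,4,4); (1,1,4,2); (1,2,4,0); (1,3,4,3); (1,4,4,1)];
 [:: (0,1,0,4); (1,0,0,0); (1,1,0,4); (1,2,0,3); (1,3,0,2); (1,4,0,1)];
 [:: (0,1,0,4); (1,0,0,1); (1,1,0,0); (1,2,0,4); (1,3,0,3); (1,4,0,2)];
 [:: (0,1,0,4); (1,0,0,2); (1,1,0,1); (1,2,0,0); (1,3,0,4); (1,4,0,3)];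
 [:: (0,1,0,4); (1,0,0,3); (1,1,0,2); (1,2,0,1); (1,3,0,0); (1,4,0,4)];
 [:: (0,1,0,4); (1,0,0,4); (1,1,0,3); (1,2,0,2); (1,3,0,1); (1,4,0,0)];
 [:: (0,1,0,4); (1,0,1,0); (1,1,1,4); (1,2,1,3); (1,3,1,2); (1,4,1,1)];
 [:: (0,1,0,4); (1,0,1,1); (1,1,1,0); (1,2,1,4); (1,3,1,3); (1,4,1,2)];
 [:: (0,1,0,4); (1,0,1,2); (1,1,1,1); (1,2,1,0); (1,3,1,4); (1,4,1,3)];
 [:: (0,1,0,4); (1,0,1,3); (1,1,1,2); (1,2,1,1); (1,3,1,0); (1,4,1,4)];
 [:: (0,1,0,4); (1,0,1,4); (1,1,1,3); (1,2,1,2); (1,3,1,1); (1,4,1,0)];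
 [:: (0,1,0,4); (1,0,2,0); (1,1,2,4); (1,2,2,3); (1,3,2,2); (1,4,2,1)];
 [:: (0,1,0,4); (1,0,2,1); (1,1,2,0); (1,2,2,4); (1,3,2,3); (1,4,2,2)];
 [:: (0,1,0,4); (1,0,2,2); (1,1,2,1); (1,2,2,0); (1,3,2,4); (1,4,2,3)];
 [:: (0,1,0,4); (1,0,2,3); (1,1,2,2); (1,2,2,1); (1,3,2,0); (1,4,2,4)];
 [:: (0,1,0,4); (1,0,2,4); (1,1,2,3); (1,2,2,2); (1,3,2,1); (1,4,2,0)];
 [:: (0,1,0,4); (1,0,3,0); (1,1,3,4); (1,2,3,3); (1,3,3,2); (1,4,3,1)];
 [:: (0,1,0,4); (1,0,3,1); (1,1,3,0); (1,2,3,4); (1,3,3,3); (1,4,3,2)];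
 [:: (0,1,0,4); (1,0,3,2); (1,1,3,1); (1,2,3,0); (1,3,3,4); (1,4,3,3)];
 [:: (0,1,0,4); (1,0,3,3); (1,1,3,2); (1,2,3,1); (1,3,3,0); (1,4,3,4)];
 [:: (0,1,0,4); (1,0,3,4); (1,1,3,3); (1,2,3,2); (1,3,3,1); (1,4,3,0)];
 [:: (0,1,0,4); (1,0,4,0); (1,1,4,4); (1,2,4,3); (1,3,4,2); (1,4,4,1)];
 [:: (0,1,0,4); (1,0,4,1); (1,1,4,0); (1,2,4,4); (1,3,4,3); (1,4,4,2)];
 [:: (0,1,0,4); (1,0,4,2); (1,1,4,1); (1,2,4,0); (1,3,4,4); (1,4,4,3)];
 [:: (0,1,0,4); (1,0,4,3); (1,1,4,2); (1,2,4,1); (1,3,4,0); (1,4,4,4)];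
 [:: (0,1,0,4); (1,0,4,4); (1,1,4,3); (1,2,4,2); (1,3,4,1); (1,4,4,0)];
 [:: (0,1,1,0); (1,0,0,0); (1,1,1,0); (1,2,2,0); (1,3,3,0); (1,4,4,0)];
 [:: (0,1,1,0); (1,0,0,1); (1,1,1,1); (1,2,2,1); (1,3,3,1); (1,4,4,1)];
 [:: (0,1,1,0); (1,0,0,2); (1,1,1,2); (1,2,2,2); (1,3,3,2); (1,4,4,2)];
 [:: (0,1,1,0); (1,0,0,3); (1,1,1,3); (1,2,2,3); (1,3,3,3); (1,4,4,3)];
 [:: (0,1,1,0); (1,0,0,4); (1,1,1,4); (1,2,2,4); (1,3,3,4); (1,4,4,4)];
 [:: (0,1,1,0); (1,0,1,0); (1,1,2,0); (1,2,3,0); (1,3,4,0); (1,4,0,0)];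
 [:: (0,1,1,0); (1,0,1,1); (1,1,2,1); (1,2,3,1); (1,3,4,1); (1,4,0,1)];
 [:: (0,1,1,0); (1,0,1,2); (1,1,2,2); (1,2,3,2); (1,3,4,2); (1,4,0,2)];
 [:: (0,1,1,0); (1,0,1,3); (1,1,2,3); (1,2,3,3); (1,3,4,3); (1,4,0,3)];
 [:: (0,1,1,0); (1,0,1,4); (1,1,2,4); (1,2,3,4); (1,3,4,4); (1,4,0,4)];
 [:: (0,1,1,0); (1,0,2,0); (1,1,3,0); (1,2,4,0); (1,3,0,0); (1,4,1,0)];
 [:: (0,1,1,0); (1,0,2,1); (1,1,3,1); (1,2,4,1); (1,3,0,1); (1,4,1,1)];
 [:: (0,1,1,0); (1,0,2,2); (1,1,3,2); (1,2,4,2); (1,3,0,2); (1,4,1,2)];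
 [:: (0,1,1,0); (1,0,2,3); (1,1,3,3); (1,2,4,3); (1,3,0,3); (1,4,1,3)];
 [:: (0,1,1,0); (1,0,2,4); (1,1,3,4); (1,2,4,4); (1,3,0,4); (1,4,1,4)];
 [:: (0,1,1,0); (1,0,3,0); (1,1,4,0); (1,2,0,0); (1,3,1,0); (1,4,2,0)];
 [:: (0,1,1,0); (1,0,3,1); (1,1,4,1); (1,2,0,1); (1,3,1,1); (1,4,2,1)];
 [:: (0,1,1,0); (1,0,3,2); (1,1,4,2); (1,2,0,2); (1,3,1,2); (1,4,2,2)];
 [:: (0,1,1,0); (1,0,3,3); (1,1,4,3); (1,2,0,3); (1,3,1,3); (1,4,2,3)];
 [:: (0,1,1,0); (1,0,3,4); (1,1,4,4); (1,2,0,4); (1,3,1,4); (1,4,2,4)];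
 [:: (0,1,1,0); (1,0,4,0); (1,1,0,0); (1,2,1,0); (1,3,2,0); (1,4,3,0)];
 [:: (0,1,1,0); (1,0,4,1); (1,1,0,1); (1,2,1,1); (1,3,2,1); (1,4,3,1)];
 [:: (0,1,1,0); (1,0,4,2); (1,1,0,2); (1,2,1,2); (1,3,2,2); (1,4,3,2)];
 [:: (0,1,1,0); (1,0,4,3); (1,1,0,3); (1,2,1,3); (1,3,2,3); (1,4,3,3)];
 [:: (0,1,1,0); (1,0,4,4); (1,1,0,4); (1,2,1,4); (1,3,2,4); (1,4,3,4)];
 [:: (0,1,1,1); (1,0,0,0); (1,1,1,1); (1,2,2,2); (1,3,3,3); (1,4,4,4)];
 [:: (0,1,1,1); (1,0,0,1); (1,1,1,2); (1,2,2,3); (1,3,3,4); (1,4,4,0)];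
 [:: (0,1,1,1); (1,0,0,2); (1,1,1,3); (1,2,2,4); (1,3,3,0); (1,4,4,1)];
 [:: (0,1,1,1); (1,0,0,3); (1,1,1,4); (1,2,2,0); (1,3,3,1); (1,4,4,2)];
 [:: (0,1,1,1); (1,0,0,4); (1,1,1,0); (1,2,2,1); (1,3,3,2); (1,4,4,3)];
 [:: (0,1,1,1); (1,0,1,0); (1,1,2,1); (1,2,3,2); (1,3,4,3); (1,4,0,4)];
 [:: (0,1,1,1); (1,0,1,1); (1,1,2,2); (1,2,3,3); (1,3,4,4); (1,4,0,0)];
 [:: (0,1,1,1); (1,0,1,2); (1,1,2,3); (1,2,3,4); (1,3,4,0); (1,4,0,1)];
 [:: (0,1,1,1); (1,0,1,3); (1,1,2,4); (1,2,3,0); (1,3,4,1); (1,4,0,2)];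
 [:: (0,1,1,1); (1,0,1,4); (1,1,2,0); (1,2,3,1); (1,3,4,2); (1,4,0,3)];
 [:: (0,1,1,1); (1,0,2,0); (1,1,3,1); (1,2,4,2); (1,3,0,3); (1,4,1,4)];
 [:: (0,1,1,1); (1,0,2,1); (1,1,3,2); (1,2,4,3); (1,3,0,4); (1,4,1,0)];
 [:: (0,1,1,1); (1,0,2,2); (1,1,3,3); (1,2,4,4); (1,3,0,0); (1,4,1,1)];
 [:: (0,1,1,1); (1,0,2,3); (1,1,3,4); (1,2,4,0); (1,3,0,1); (1,4,1,2)];
 [:: (0,1,1,1); (1,0,2,4); (1,1,3,0); (1,2,4,1); (1,3,0,2); (1,4,1,3)];
 [:: (0,1,1,1); (1,0,3,0); (1,1,4,1); (1,2,0,2); (1,3,1,3); (1,4,2,4)];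
 [:: (0,1,1,1); (1,0,3,1); (1,1,4,2); (1,2,0,3); (1,3,1,4); (1,4,2,0)];
 [:: (0,1,1,1); (1,0,3,2); (1,1,4,3); (1,2,0,4); (1,3,1,0); (1,4,2,1)];
 [:: (0,1,1,1); (1,0,3,3); (1,1,4,4); (1,2,0,0); (1,3,1,1); (1,4,2,2)];
 [:: (0,1,1,1); (1,0,3,4); (1,1,4,0); (1,2,0,1); (1,3,1,2); (1,4,2,3)];
 [:: (0,1,1,1); (1,0,4,0); (1,1,0,1); (1,2,1,2); (1,3,2,3); (1,4,3,4)];
 [:: (0,1,1,1); (1,0,4,1); (1,1,0,2); (1,2,1,3); (1,3,2,4); (1,4,3,0)];
 [:: (0,1,1,1); (1,0,4,2); (1,1,0,3); (1,2,1,4); (1,3,2,0); (1,4,3,1)];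
 [:: (0,1,1,1); (1,0,4,3); (1,1,0,4); (1,2,1,0); (1,3,2,1); (1,4,3,2)];
 [:: (0,1,1,1); (1,0,4,4); (1,1,0,0); (1,2,1,1); (1,3,2,2); (1,4,3,3)];
 [:: (0,1,1,2); (1,0,0,0); (1,1,1,2); (1,2,2,4); (1,3,3,1); (1,4,4,3)];
 [:: (0,1,1,2); (1,0,0,1); (1,1,1,3); (1,2,2,0); (1,3,3,2); (1,4,4,4)];
 [:: (0,1,1,2); (1,0,0,2); (1,1,1,4); (1,2,2,1); (1,3,3,3); (1,4,4,0)];
 [:: (0,1,1,2); (1,0,0,3); (1,1,1,0); (1,2,2,2); (1,3,3,4); (1,4,4,1)];
 [:: (0,1,1,2); (1,0,0,4); (1,1,1,1); (1,2,2,3); (1,3,3,0); (1,4,4,2)];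
 [:: (0,1,1,2); (1,0,1,0); (1,1,2,2); (1,2,3,4); (1,3,4,1); (1,4,0,3)];
 [:: (0,1,1,2); (1,0,1,1); (1,1,2,3); (1,2,3,0); (1,3,4,2); (1,4,0,4)];
 [:: (0,1,1,2); (1,0,1,2); (1,1,2,4); (1,2,3,1); (1,3,4,3); (1,4,0,0)];
 [:: (0,1,1,2); (1,0,1,3); (1,1,2,0); (1,2,3,2); (1,3,4,4); (1,4,0,1)];
 [:: (0,1,1,2); (1,0,1,4); (1,1,2,1); (1,2,3,3); (1,3,4,0); (1,4,0,2)];
 [:: (0,1,1,2); (1,0,2,0); (1,1,3,2); (1,2,4,4); (1,3,0,1); (1,4,1,3)];
 [:: (0,1,1,2); (1,0,2,1); (1,1,3,3); (1,2,4,0); (1,3,0,2); (1,4,1,4)];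
 [:: (0,1,1,2); (1,0,2,2); (1,1,3,4); (1,2,4,1); (1,3,0,3); (1,4,1,0)];
 [:: (0,1,1,2); (1,0,2,3); (1,1,3,0); (1,2,4,2); (1,3,0,4); (1,4,1,1)];
 [:: (0,1,1,2); (1,0,2,4); (1,1,3,1); (1,2,4,3); (1,3,0,0); (1,4,1,2)];
 [:: (0,1,1,2); (1,0,3,0); (1,1,4,2); (1,2,0,4); (1,3,1,1); (1,4,2,3)];
 [:: (0,1,1,2); (1,0,3,1); (1,1,4,3); (1,2,0,0); (1,3,1,2); (1,4,2,4)];
 [:: (0,1,1,2); (1,0,3,2); (1,1,4,4); (1,2,0,1); (1,3,1,3); (1,4,2,0)];
 [:: (0,1,1,2); (1,0,3,3); (1,1,4,0); (1,2,0,2); (1,3,1,4); (1,4,2,1)];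
 [:: (0,1,1,2); (1,0,3,4); (1,1,4,1); (1,2,0,3); (1,3,1,0); (1,4,2,2)];
 [:: (0,1,1,2); (1,0,4,0); (1,1,0,2); (1,2,1,4); (1,3,2,1); (1,4,3,3)];
 [:: (0,1,1,2); (1,0,4,1); (1,1,0,3); (1,2,1,0); (1,3,2,2); (1,4,3,4)];
 [:: (0,1,1,2); (1,0,4,2); (1,1,0,4); (1,2,1,1); (1,3,2,3); (1,4,3,0)];
 [:: (0,1,1,2); (1,0,4,3); (1,1,0,0); (1,2,1,2); (1,3,2,4); (1,4,3,1)];
 [:: (0,1,1,2); (1,0,4,4); (1,1,0,1); (1,2,1,3); (1,3,2,0); (1,4,3,2)];
 [:: (0,1,1,3); (1,0,0,0); (1,1,1,3); (1,2,2,1); (1,3,3,4); (1,4,4,2)];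
 [:: (0,1,1,3); (1,0,0,1); (1,1,1,4); (1,2,2,2); (1,3,3,0); (1,4,4,3)];
 [:: (0,1,1,3); (1,0,0,2); (1,1,1,0); (1,2,2,3); (1,3,3,1); (1,4,4,4)];
 [:: (0,1,1,3); (1,0,0,3); (1,1,1,1); (1,2,2,4); (1,3,3,2); (1,4,4,0)];
 [:: (0,1,1,3); (1,0,0,4); (1,1,1,2); (1,2,2,0); (1,3,3,3); (1,4,4,1)];
 [:: (0,1,1,3); (1,0,1,0); (1,1,2,3); (1,2,3,1); (1,3,4,4); (1,4,0,2)];
 [:: (0,1,1,3); (1,0,1,1); (1,1,2,4); (1,2,3,2); (1,3,4,0); (1,4,0,3)];
 [:: (0,1,1,3); (1,0,1,2); (1,1,2,0); (1,2,3,3); (1,3,4,1); (1,4,0,4)];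
 [:: (0,1,1,3); (1,0,1,3); (1,1,2,1); (1,2,3,4); (1,3,4,2); (1,4,0,0)];
 [:: (0,1,1,3); (1,0,1,4); (1,1,2,2); (1,2,3,0); (1,3,4,3); (1,4,0,1)];
 [:: (0,1,1,3); (1,0,2,0); (1,1,3,3); (1,2,4,1); (1,3,0,4); (1,4,1,2)];
 [:: (0,1,1,3); (1,0,2,1); (1,1,3,4); (1,2,4,2); (1,3,0,0); (1,4,1,3)];
 [:: (0,1,1,3); (1,0,2,2); (1,1,3,0); (1,2,4,3); (1,3,0,1); (1,4,1,4)];
 [:: (0,1,1,3); (1,0,2,3); (1,1,3,1); (1,2,4,4); (1,3,0,2); (1,4,1,0)];
 [:: (0,1,1,3); (1,0,2,4); (1,1,3,2); (1,2,4,0); (1,3,0,3); (1,4,1,1)];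
 [:: (0,1,1,3); (1,0,3,0); (1,1,4,3); (1,2,0,1); (1,3,1,4); (1,4,2,2)];
 [:: (0,1,1,3); (1,0,3,1); (1,1,4,4); (1,2,0,2); (1,3,1,0); (1,4,2,3)];
 [:: (0,1,1,3); (1,0,3,2); (1,1,4,0); (1,2,0,3); (1,3,1,1); (1,4,2,4)];
 [:: (0,1,1,3); (1,0,3,3); (1,1,4,1); (1,2,0,4); (1,3,1,2); (1,4,2,0)];
 [:: (0,1,1,3); (1,0,3,4); (1,1,4,2); (1,2,0,0); (1,3,1,3); (1,4,2,1)];
 [:: (0,1,1,3); (1,0,4,0); (1,1,0,3); (1,2,1,1); (1,3,2,4); (1,4,3,2)];
 [:: (0,1,1,3); (1,0,4,1); (1,1,0,4); (1,2,1,2); (1,3,2,0); (1,4,3,3)];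
 [:: (0,1,1,3); (1,0,4,2); (1,1,0,0); (1,2,1,3); (1,3,2,1); (1,4,3,4)];
 [:: (0,1,1,3); (1,0,4,3); (1,1,0,1); (1,2,1,4); (1,3,2,2); (1,4,3,0)];
 [:: (0,1,1,3); (1,0,4,4); (1,1,0,2); (1,2,1,0); (1,3,2,3); (1,4,3,1)];
 [:: (0,1,1,4); (1,0,0,0); (1,1,1,4); (1,2,2,3); (1,3,3,2); (1,4,4,1)];
 [:: (0,1,1,4); (1,0,0,1); (1,1,1,0); (1,2,2,4); (1,3,3,3); (1,4,4,2)];
 [:: (0,1,1,4); (1,0,0,2); (1,1,1,1); (1,2,2,0); (1,3,3,4); (1,4,4,3)];
 [:: (0,1,1,4); (1,0,0,3); (1,1,1,2); (1,2,2,1); (1,3,3,0); (1,4,4,4)];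
 [:: (0,1,1,4); (1,0,0,4); (1,1,1,3); (1,2,2,2); (1,3,3,1); (1,4,4,0)];
 [:: (0,1,1,4); (1,0,1,0); (1,1,2,4); (1,2,3,3); (1,3,4,2); (1,4,0,1)];
 [:: (0,1,1,4); (1,0,1,1); (1,1,2,0); (1,2,3,4); (1,3,4,3); (1,4,0,2)];
 [:: (0,1,1,4); (1,0,1,2); (1,1,2,1); (1,2,3,0); (1,3,4,4); (1,4,0,3)];
 [:: (0,1,1,4); (1,0,1,3); (1,1,2,2); (1,2,3,1); (1,3,4,0); (1,4,0,4)];
 [:: (0,1,1,4); (1,0,1,4); (1,1,2,3); (1,2,3,2); (1,3,4,1); (1,4,0,0)];
 [:: (0,1,1,4); (1,0,2,0); (1,1,3,4); (1,2,4,3); (1,3,0,2); (1,4,1,1)];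
 [:: (0,1,1,4); (1,0,2,1); (1,1,3,0); (1,2,4,4); (1,3,0,3); (1,4,1,2)];
 [:: (0,1,1,4); (1,0,2,2); (1,1,3,1); (1,2,4,0); (1,3,0,4); (1,4,1,3)];
 [:: (0,1,1,4); (1,0,2,3); (1,1,3,2); (1,2,4,1); (1,3,0,0); (1,4,1,4)];
 [:: (0,1,1,4); (1,0,2,4); (1,1,3,3); (1,2,4,2); (1,3,0,1); (1,4,1,0)];
 [:: (0,1,1,4); (1,0,3,0); (1,1,4,4); (1,2,0,3); (1,3,1,2); (1,4,2,1)];
 [:: (0,1,1,4); (1,0,3,1); (1,1,4,0); (1,2,0,4); (1,3,1,3); (1,4,2,2)];
 [:: (0,1,1,4); (1,0,3,2); (1,1,4,1); (1,2,0,0); (1,3,1,4); (1,4,2,3)];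
 [:: (0,1,1,4); (1,0,3,3); (1,1,4,2); (1,2,0,1); (1,3,1,0); (1,4,2,4)];
 [:: (0,1,1,4); (1,0,3,4); (1,1,4,3); (1,2,0,2); (1,3,1,1); (1,4,2,0)];
 [:: (0,1,1,4); (1,0,4,0); (1,1,0,4); (1,2,1,3); (1,3,2,2); (1,4,3,1)];
 [:: (0,1,1,4); (1,0,4,1); (1,1,0,0); (1,2,1,4); (1,3,2,3); (1,4,3,2)];
 [:: (0,1,1,4); (1,0,4,2); (1,1,0,1); (1,2,1,0); (1,3,2,4); (1,4,3,3)];
 [:: (0,1,1,4); (1,0,4,3); (1,1,0,2); (1,2,1,1); (1,3,2,0); (1,4,3,4)];
 [:: (0,1,1,4); (1,0,4,4); (1,1,0,3); (1,2,1,2); (1,3,2,1); (1,4,3,0)];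
 [:: (0,1,2,0); (1,0,0,0); (1,1,2,0); (1,2,4,0); (1,3,1,0); (1,4,3,0)];
 [:: (0,1,2,0); (1,0,0,1); (1,1,2,1); (1,2,4,1); (1,3,1,1); (1,4,3,1)];
 [:: (0,1,2,0); (1,0,0,2); (1,1,2,2); (1,2,4,2); (1,3,1,2); (1,4,3,2)];
 [:: (0,1,2,0); (1,0,0,3); (1,1,2,3); (1,2,4,3); (1,3,1,3); (1,4,3,3)];
 [:: (0,1,2,0); (1,0,0,4); (1,1,2,4); (1,2,4,4); (1,3,1,4); (1,4,3,4)];
 [:: (0,1,2,0); (1,0,1,0); (1,1,3,0); (1,2,0,0); (1,3,2,0); (1,4,4,0)];
 [:: (0,1,2,0); (1,0,1,1); (1,1,3,1); (1,2,0,1); (1,3,2,1); (1,4,4,1)];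
 [:: (0,1,2,0); (1,0,1,2); (1,1,3,2); (1,2,0,2); (1,3,2,2); (1,4,4,2)];
 [:: (0,1,2,0); (1,0,1,3); (1,1,3,3); (1,2,0,3); (1,3,2,3); (1,4,4,3)];
 [:: (0,1,2,0); (1,0,1,4); (1,1,3,4); (1,2,0,4); (1,3,2,4); (1,4,4,4)];
 [:: (0,1,2,0); (1,0,2,0); (1,1,4,0); (1,2,1,0); (1,3,3,0); (1,4,0,0)];
 [:: (0,1,2,0); (1,0,2,1); (1,1,4,1); (1,2,1,1); (1,3,3,1); (1,4,0,1)];
 [:: (0,1,2,0); (1,0,2,2); (1,1,4,2); (1,2,1,2); (1,3,3,2); (1,4,0,2)];
 [:: (0,1,2,0); (1,0,2,3); (1,1,4,3); (1,2,1,3); (1,3,3,3); (1,4,0,3)];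
 [:: (0,1,2,0); (1,0,2,4); (1,1,4,4); (1,2,1,4); (1,3,3,4); (1,4,0,4)];
 [:: (0,1,2,0); (1,0,3,0); (1,1,0,0); (1,2,2,0); (1,3,4,0); (1,4,1,0)];
 [:: (0,1,2,0); (1,0,3,1); (1,1,0,1); (1,2,2,1); (1,3,4,1); (1,4,1,1)];
 [:: (0,1,2,0); (1,0,3,2); (1,1,0,2); (1,2,2,2); (1,3,4,2); (1,4,1,2)];
 [:: (0,1,2,0); (1,0,3,3); (1,1,0,3); (1,2,2,3); (1,3,4,3); (1,4,1,3)];
 [:: (0,1,2,0); (1,0,3,4); (1,1,0,4); (1,2,2,4); (1,3,4,4); (1,4,1,4)];
 [:: (0,1,2,0); (1,0,4,0); (1,1,1,0); (1,2,3,0); (1,3,0,0); (1,4,2,0)];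
 [:: (0,1,2,0); (1,0,4,1); (1,1,1,1); (1,2,3,1); (1,3,0,1); (1,4,2,1)];
 [:: (0,1,2,0); (1,0,4,2); (1,1,1,2); (1,2,3,2); (1,3,0,2); (1,4,2,2)];
 [:: (0,1,2,0); (1,0,4,3); (1,1,1,3); (1,2,3,3); (1,3,0,3); (1,4,2,3)];
 [:: (0,1,2,0); (1,0,4,4); (1,1,1,4); (1,2,3,4); (1,3,0,4); (1,4,2,4)];
 [:: (0,1,2,1); (1,0,0,0); (1,1,2,1); (1,2,4,2); (1,3,1,3); (1,4,3,4)];
 [:: (0,1,2,1); (1,0,0,1); (1,1,2,2); (1,2,4,3); (1,3,1,4); (1,4,3,0)];
 [:: (0,1,2,1); (1,0,0,2); (1,1,2,3); (1,2,4,4); (1,3,1,0); (1,4,3,1)];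
 [:: (0,1,2,1); (1,0,0,3); (1,1,2,4); (1,2,4,0); (1,3,1,1); (1,4,3,2)];
 [:: (0,1,2,1); (1,0,0,4); (1,1,2,0); (1,2,4,1); (1,3,1,2); (1,4,3,3)];
 [:: (0,1,2,1); (1,0,1,0); (1,1,3,1); (1,2,0,2); (1,3,2,3); (1,4,4,4)];
 [:: (0,1,2,1); (1,0,1,1); (1,1,3,2); (1,2,0,3); (1,3,2,4); (1,4,4,0)];
 [:: (0,1,2,1); (1,0,1,2); (1,1,3,3); (1,2,0,4); (1,3,2,0); (1,4,4,1)];
 [:: (0,1,2,1); (1,0,1,3); (1,1,3,4); (1,2,0,0); (1,3,2,1); (1,4,4,2)];
 [:: (0,1,2,1); (1,0,1,4); (1,1,3,0); (1,2,0,1); (1,3,2,2); (1,4,4,3)];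
 [:: (0,1,2,1); (1,0,2,0); (1,1,4,1); (1,2,1,2); (1,3,3,3); (1,4,0,4)];
 [:: (0,1,2,1); (1,0,2,1); (1,1,4,2); (1,2,1,3); (1,3,3,4); (1,4,0,0)];
 [:: (0,1,2,1); (1,0,2,2); (1,1,4,3); (1,2,1,4); (1,3,3,0); (1,4,0,1)];
 [:: (0,1,2,1); (1,0,2,3); (1,1,4,4); (1,2,1,0); (1,3,3,1); (1,4,0,2)];
 [:: (0,1,2,1); (1,0,2,4); (1,1,4,0); (1,2,1,1); (1,3,3,2); (1,4,0,3)];
 [:: (0,1,2,1); (1,0,3,0); (1,1,0,1); (1,2,2,2); (1,3,4,3); (1,4,1,4)];
 [:: (0,1,2,1); (1,0,3,1); (1,1,0,2); (1,2,2,3); (1,3,4,4); (1,4,1,0)];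
 [:: (0,1,2,1); (1,0,3,2); (1,1,0,3); (1,2,2,4); (1,3,4,0); (1,4,1,1)];
 [:: (0,1,2,1); (1,0,3,3); (1,1,0,4); (1,2,2,0); (1,3,4,1); (1,4,1,2)];
 [:: (0,1,2,1); (1,0,3,4); (1,1,0,0); (1,2,2,1); (1,3,4,2); (1,4,1,3)];
 [:: (0,1,2,1); (1,0,4,0); (1,1,1,1); (1,2,3,2); (1,3,0,3); (1,4,2,4)];
 [:: (0,1,2,1); (1,0,4,1); (1,1,1,2); (1,2,3,3); (1,3,0,4); (1,4,2,0)];
 [:: (0,1,2,1); (1,0,4,2); (1,1,1,3); (1,2,3,4); (1,3,0,0); (1,4,2,1)];
 [:: (0,1,2,1); (1,0,4,3); (1,1,1,4); (1,2,3,0); (1,3,0,1); (1,4,2,2)];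
 [:: (0,1,2,1); (1,0,4,4); (1,1,1,0); (1,2,3,1); (1,3,0,2); (1,4,2,3)];
 [:: (0,1,2,2); (1,0,0,0); (1,1,2,2); (1,2,4,4); (1,3,1,1); (1,4,3,3)];
 [:: (0,1,2,2); (1,0,0,1); (1,1,2,3); (1,2,4,0); (1,3,1,2); (1,4,3,4)];
 [:: (0,1,2,2); (1,0,0,2); (1,1,2,4); (1,2,4,1); (1,3,1,3); (1,4,3,0)];
 [:: (0,1,2,2); (1,0,0,3); (1,1,2,0); (1,2,4,2); (1,3,1,4); (1,4,3,1)];
 [:: (0,1,2,2); (1,0,0,4); (1,1,2,1); (1,2,4,3); (1,3,1,0); (1,4,3,2)];
 [:: (0,1,2,2); (1,0,1,0); (1,1,3,2); (1,2,0,4); (1,3,2,1); (1,4,4,3)];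
 [:: (0,1,2,2); (1,0,1,1); (1,1,3,3); (1,2,0,0); (1,3,2,2); (1,4,4,4)];
 [:: (0,1,2,2); (1,0,1,2); (1,1,3,4); (1,2,0,1); (1,3,2,3); (1,4,4,0)];
 [:: (0,1,2,2); (1,0,1,3); (1,1,3,0); (1,2,0,2); (1,3,2,4); (1,4,4,1)];
 [:: (0,1,2,2); (1,0,1,4); (1,1,3,1); (1,2,0,3); (1,3,2,0); (1,4,4,2)];
 [:: (0,1,2,2); (1,0,2,0); (1,1,4,2); (1,2,1,4); (1,3,3,1); (1,4,0,3)];
 [:: (0,1,2,2); (1,0,2,1); (1,1,4,3); (1,2,1,0); (1,3,3,2); (1,4,0,4)];
 [:: (0,1,2,2); (1,0,2,2); (1,1,4,4); (1,2,1,1); (1,3,3,3); (1,4,0,0)];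
 [:: (0,1,2,2); (1,0,2,3); (1,1,4,0); (1,2,1,2); (1,3,3,4); (1,4,0,1)];
 [:: (0,1,2,2); (1,0,2,4); (1,1,4,1); (1,2,1,3); (1,3,3,0); (1,4,0,2)];
 [:: (0,1,2,2); (1,0,3,0); (1,1,0,2); (1,2,2,4); (1,3,4,1); (1,4,1,3)];
 [:: (0,1,2,2); (1,0,3,1); (1,1,0,3); (1,2,2,0); (1,3,4,2); (1,4,1,4)];
 [:: (0,1,2,2); (1,0,3,2); (1,1,0,4); (1,2,2,1); (1,3,4,3); (1,4,1,0)];
 [:: (0,1,2,2); (1,0,3,3); (1,1,0,0); (1,2,2,2); (1,3,4,4); (1,4,1,1)];
 [:: (0,1,2,2); (1,0,3,4); (1,1,0,1); (1,2,2,3); (1,3,4,0); (1,4,1,2)];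
 [:: (0,1,2,2); (1,0,4,0); (1,1,1,2); (1,2,3,4); (1,3,0,1); (1,4,2,3)];
 [:: (0,1,2,2); (1,0,4,1); (1,1,1,3); (1,2,3,0); (1,3,0,2); (1,4,2,4)];
 [:: (0,1,2,2); (1,0,4,2); (1,1,1,4); (1,2,3,1); (1,3,0,3); (1,4,2,0)];
 [:: (0,1,2,2); (1,0,4,3); (1,1,1,0); (1,2,3,2); (1,3,0,4); (1,4,2,1)];
 [:: (0,1,2,2); (1,0,4,4); (1,1,1,1); (1,2,3,3); (1,3,0,0); (1,4,2,2)];
 [:: (0,1,2,3); (1,0,0,0); (1,1,2,3); (1,2,4,1); (1,3,1,4); (1,4,3,2)];
 [:: (0,1,2,3); (1,0,0,1); (1,1,2,4); (1,2,4,2); (1,3,1,0); (1,4,3,3)];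
 [:: (0,1,2,3); (1,0,0,2); (1,1,2,0); (1,2,4,3); (1,3,1,1); (1,4,3,4)];
 [:: (0,1,2,3); (1,0,0,3); (1,1,2,1); (1,2,4,4); (1,3,1,2); (1,4,3,0)];
 [:: (0,1,2,3); (1,0,0,4); (1,1,2,2); (1,2,4,0); (1,3,1,3); (1,4,3,1)];
 [:: (0,1,2,3); (1,0,1,0); (1,1,3,3); (1,2,0,1); (1,3,2,4); (1,4,4,2)];
 [:: (0,1,2,3); (1,0,1,1); (1,1,3,4); (1,2,0,2); (1,3,2,0); (1,4,4,3)];
 [:: (0,1,2,3); (1,0,1,2); (1,1,3,0); (1,2,0,3); (1,3,2,1); (1,4,4,4)];
 [:: (0,1,2,3); (1,0,1,3); (1,1,3,1); (1,2,0,4); (1,3,2,2); (1,4,4,0)];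
 [:: (0,1,2,3); (1,0,1,4); (1,1,3,2); (1,2,0,0); (1,3,2,3); (1,4,4,1)];
 [:: (0,1,2,3); (1,0,2,0); (1,1,4,3); (1,2,1,1); (1,3,3,4); (1,4,0,2)];
 [:: (0,1,2,3); (1,0,2,1); (1,1,4,4); (1,2,1,2); (1,3,3,0); (1,4,0,3)];
 [:: (0,1,2,3); (1,0,2,2); (1,1,4,0); (1,2,1,3); (1,3,3,1); (1,4,0,4)];
 [:: (0,1,2,3); (1,0,2,3); (1,1,4,1); (1,2,1,4); (1,3,3,2); (1,4,0,0)];
 [:: (0,1,2,3); (1,0,2,4); (1,1,4,2); (1,2,1,0); (1,3,3,3); (1,4,0,1)];
 [:: (0,1,2,3); (1,0,3,0); (1,1,0,3); (1,2,2,1); (1,3,4,4); (1,4,1,2)];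
 [:: (0,1,2,3); (1,0,3,1); (1,1,0,4); (1,2,2,2); (1,3,4,0); (1,4,1,3)];
 [:: (0,1,2,3); (1,0,3,2); (1,1,0,0); (1,2,2,3); (1,3,4,1); (1,4,1,4)];
 [:: (0,1,2,3); (1,0,3,3); (1,1,0,1); (1,2,2,4); (1,3,4,2); (1,4,1,0)];
 [:: (0,1,2,3); (1,0,3,4); (1,1,0,2); (1,2,2,0); (1,3,4,3); (1,4,1,1)];
 [:: (0,1,2,3); (1,0,4,0); (1,1,1,3); (1,2,3,1); (1,3,0,4); (1,4,2,2)];
 [:: (0,1,2,3); (1,0,4,1); (1,1,1,4); (1,2,3,2); (1,3,0,0); (1,4,2,3)];
 [:: (0,1,2,3); (1,0,4,2); (1,1,1,0); (1,2,3,3); (1,3,0,1); (1,4,2,4)];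
 [:: (0,1,2,3); (1,0,4,3); (1,1,1,1); (1,2,3,4); (1,3,0,2); (1,4,2,0)];
 [:: (0,1,2,3); (1,0,4,4); (1,1,1,2); (1,2,3,0); (1,3,0,3); (1,4,2,1)];
 [:: (0,1,2,4); (1,0,0,0); (1,1,2,4); (1,2,4,3); (1,3,1,2); (1,4,3,1)];
 [:: (0,1,2,4); (1,0,0,1); (1,1,2,0); (1,2,4,4); (1,3,1,3); (1,4,3,2)];
 [:: (0,1,2,4); (1,0,0,2); (1,1,2,1); (1,2,4,0); (1,3,1,4); (1,4,3,3)];
 [:: (0,1,2,4); (1,0,0,3); (1,1,2,2); (1,2,4,1); (1,3,1,0); (1,4,3,4)];
 [:: (0,1,2,4); (1,0,0,4); (1,1,2,3); (1,2,4,2); (1,3,1,1); (1,4,3,0)];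
 [:: (0,1,2,4); (1,0,1,0); (1,1,3,4); (1,2,0,3); (1,3,2,2); (1,4,4,1)];
 [:: (0,1,2,4); (1,0,1,1); (1,1,3,0); (1,2,0,4); (1,3,2,3); (1,4,4,2)];
 [:: (0,1,2,4); (1,0,1,2); (1,1,3,1); (1,2,0,0); (1,3,2,4); (1,4,4,3)];
 [:: (0,1,2,4); (1,0,1,3); (1,1,3,2); (1,2,0,1); (1,3,2,0); (1,4,4,4)];
 [:: (0,1,2,4); (1,0,1,4); (1,1,3,3); (1,2,0,2); (1,3,2,1); (1,4,4,0)];
 [:: (0,1,2,4); (1,0,2,0); (1,1,4,4); (1,2,1,3); (1,3,3,2); (1,4,0,1)];
 [:: (0,1,2,4); (1,0,2,1); (1,1,4,0); (1,2,1,4); (1,3,3,3); (1,4,0,2)];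
 [:: (0,1,2,4); (1,0,2,2); (1,1,4,1); (1,2,1,0); (1,3,3,4); (1,4,0,3)];
 [:: (0,1,2,4); (1,0,2,3); (1,1,4,2); (1,2,1,1); (1,3,3,0); (1,4,0,4)];
 [:: (0,1,2,4); (1,0,2,4); (1,1,4,3); (1,2,1,2); (1,3,3,1); (1,4,0,0)];
 [:: (0,1,2,4); (1,0,3,0); (1,1,0,4); (1,2,2,3); (1,3,4,2); (1,4,1,1)];
 [:: (0,1,2,4); (1,0,3,1); (1,1,0,0); (1,2,2,4); (1,3,4,3); (1,4,1,2)];
 [:: (0,1,2,4); (1,0,3,2); (1,1,0,1); (1,2,2,0); (1,3,4,4); (1,4,1,3)];
 [:: (0,1,2,4); (1,0,3,3); (1,1,0,2); (1,2,2,1); (1,3,4,0); (1,4,1,4)];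
 [:: (0,1,2,4); (1,0,3,4); (1,1,0,3); (1,2,2,2); (1,3,4,1); (1,4,1,0)];
 [:: (0,1,2,4); (1,0,4,0); (1,1,1,4); (1,2,3,3); (1,3,0,2); (1,4,2,1)];
 [:: (0,1,2,4); (1,0,4,1); (1,1,1,0); (1,2,3,4); (1,3,0,3); (1,4,2,2)];
 [:: (0,1,2,4); (1,0,4,2); (1,1,1,1); (1,2,3,0); (1,3,0,4); (1,4,2,3)];
 [:: (0,1,2,4); (1,0,4,3); (1,1,1,2); (1,2,3,1); (1,3,0,0); (1,4,2,4)];
 [:: (0,1,2,4); (1,0,4,4); (1,1,1,3); (1,2,3,2); (1,3,0,1); (1,4,2,0)];
 [:: (0,1,3,0); (1,0,0,0); (1,1,3,0); (1,2,1,0); (1,3,4,0); (1,4,2,0)];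
 [:: (0,1,3,0); (1,0,0,1); (1,1,3,1); (1,2,1,1); (1,3,4,1); (1,4,2,1)];
 [:: (0,1,3,0); (1,0,0,2); (1,1,3,2); (1,2,1,2); (1,3,4,2); (1,4,2,2)];
 [:: (0,1,3,0); (1,0,0,3); (1,1,3,3); (1,2,1,3); (1,3,4,3); (1,4,2,3)];
 [:: (0,1,3,0); (1,0,0,4); (1,1,3,4); (1,2,1,4); (1,3,4,4); (1,4,2,4)];
 [:: (0,1,3,0); (1,0,1,0); (1,1,4,0); (1,2,2,0); (1,3,0,0); (1,4,3,0)];
 [:: (0,1,3,0); (1,0,1,1); (1,1,4,1); (1,2,2,1); (1,3,0,1); (1,4,3,1)];
 [:: (0,1,3,0); (1,0,1,2); (1,1,4,2); (1,2,2,2); (1,3,0,2); (1,4,3,2)];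
 [:: (0,1,3,0); (1,0,1,3); (1,1,4,3); (1,2,2,3); (1,3,0,3); (1,4,3,3)];
 [:: (0,1,3,0); (1,0,1,4); (1,1,4,4); (1,2,2,4); (1,3,0,4); (1,4,3,4)];
 [:: (0,1,3,0); (1,0,2,0); (1,1,0,0); (1,2,3,0); (1,3,1,0); (1,4,4,0)];
 [:: (0,1,3,0); (1,0,2,1); (1,1,0,1); (1,2,3,1); (1,3,1,1); (1,4,4,1)];
 [:: (0,1,3,0); (1,0,2,2); (1,1,0,2); (1,2,3,2); (1,3,1,2); (1,4,4,2)];
 [:: (0,1,3,0); (1,0,2,3); (1,1,0,3); (1,2,3,3); (1,3,1,3); (1,4,4,3)];
 [:: (0,1,3,0); (1,0,2,4); (1,1,0,4); (1,2,3,4); (1,3,1,4); (1,4,4,4)];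
 [:: (0,1,3,0); (1,0,3,0); (1,1,1,0); (1,2,4,0); (1,3,2,0); (1,4,0,0)];
 [:: (0,1,3,0); (1,0,3,1); (1,1,1,1); (1,2,4,1); (1,3,2,1); (1,4,0,1)];
 [:: (0,1,3,0); (1,0,3,2); (1,1,1,2); (1,2,4,2); (1,3,2,2); (1,4,0,2)];
 [:: (0,1,3,0); (1,0,3,3); (1,1,1,3); (1,2,4,3); (1,3,2,3); (1,4,0,3)];
 [:: (0,1,3,0); (1,0,3,4); (1,1,1,4); (1,2,4,4); (1,3,2,4); (1,4,0,4)];
 [:: (0,1,3,0); (1,0,4,0); (1,1,2,0); (1,2,0,0); (1,3,3,0); (1,4,1,0)];
 [:: (0,1,3,0); (1,0,4,1); (1,1,2,1); (1,2,0,1); (1,3,3,1); (1,4,1,1)];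
 [:: (0,1,3,0); (1,0,4,2); (1,1,2,2); (1,2,0,2); (1,3,3,2); (1,4,1,2)];
 [:: (0,1,3,0); (1,0,4,3); (1,1,2,3); (1,2,0,3); (1,3,3,3); (1,4,1,3)];
 [:: (0,1,3,0); (1,0,4,4); (1,1,2,4); (1,2,0,4); (1,3,3,4); (1,4,1,4)];
 [:: (0,1,3,1); (1,0,0,0); (1,1,3,1); (1,2,1,2); (1,3,4,3); (1,4,2,4)];
 [:: (0,1,3,1); (1,0,0,1); (1,1,3,2); (1,2,1,3); (1,3,4,4); (1,4,2,0)];
 [:: (0,1,3,1); (1,0,0,2); (1,1,3,3); (1,2,1,4); (1,3,4,0); (1,4,2,1)];
 [:: (0,1,3,1); (1,0,0,3); (1,1,3,4); (1,2,1,0); (1,3,4,1); (1,4,2,2)];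
 [:: (0,1,3,1); (1,0,0,4); (1,1,3,0); (1,2,1,1); (1,3,4,2); (1,4,2,3)];
 [:: (0,1,3,1); (1,0,1,0); (1,1,4,1); (1,2,2,2); (1,3,0,3); (1,4,3,4)];
 [:: (0,1,3,1); (1,0,1,1); (1,1,4,2); (1,2,2,3); (1,3,0,4); (1,4,3,0)];
 [:: (0,1,3,1); (1,0,1,2); (1,1,4,3); (1,2,2,4); (1,3,0,0); (1,4,3,1)];
 [:: (0,1,3,1); (1,0,1,3); (1,1,4,4); (1,2,2,0); (1,3,0,1); (1,4,3,2)];
 [:: (0,1,3,1); (1,0,1,4); (1,1,4,0); (1,2,2,1); (1,3,0,2); (1,4,3,3)];
 [:: (0,1,3,1); (1,0,2,0); (1,1,0,1); (1,2,3,2); (1,3,1,3); (1,4,4,4)];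
 [:: (0,1,3,1); (1,0,2,1); (1,1,0,2); (1,2,3,3); (1,3,1,4); (1,4,4,0)];
 [:: (0,1,3,1); (1,0,2,2); (1,1,0,3); (1,2,3,4); (1,3,1,0); (1,4,4,1)];
 [:: (0,1,3,1); (1,0,2,3); (1,1,0,4); (1,2,3,0); (1,3,1,1); (1,4,4,2)];
 [:: (0,1,3,1); (1,0,2,4); (1,1,0,0); (1,2,3,1); (1,3,1,2); (1,4,4,3)];
 [:: (0,1,3,1); (1,0,3,0); (1,1,1,1); (1,2,4,2); (1,3,2,3); (1,4,0,4)];
 [:: (0,1,3,1); (1,0,3,1); (1,1,1,2); (1,2,4,3); (1,3,2,4); (1,4,0,0)];
 [:: (0,1,3,1); (1,0,3,2); (1,1,1,3); (1,2,4,4); (1,3,2,0); (1,4,0,1)];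
 [:: (0,1,3,1); (1,0,3,3); (1,1,1,4); (1,2,4,0); (1,3,2,1); (1,4,0,2)];
 [:: (0,1,3,1); (1,0,3,4); (1,1,1,0); (1,2,4,1); (1,3,2,2); (1,4,0,3)];
 [:: (0,1,3,1); (1,0,4,0); (1,1,2,1); (1,2,0,2); (1,3,3,3); (1,4,1,4)];
 [:: (0,1,3,1); (1,0,4,1); (1,1,2,2); (1,2,0,3); (1,3,3,4); (1,4,1,0)];
 [:: (0,1,3,1); (1,0,4,2); (1,1,2,3); (1,2,0,4); (1,3,3,0); (1,4,1,1)];
 [:: (0,1,3,1); (1,0,4,3); (1,1,2,4); (1,2,0,0); (1,3,3,1); (1,4,1,2)];
 [:: (0,1,3,1); (1,0,4,4); (1,1,2,0); (1,2,0,1); (1,3,3,2); (1,4,1,3)];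
 [:: (0,1,3,2); (1,0,0,0); (1,1,3,2); (1,2,1,4); (1,3,4,1); (1,4,2,3)];
 [:: (0,1,3,2); (1,0,0,1); (1,1,3,3); (1,2,1,0); (1,3,4,2); (1,4,2,4)];
 [:: (0,1,3,2); (1,0,0,2); (1,1,3,4); (1,2,1,1); (1,3,4,3); (1,4,2,0)];
 [:: (0,1,3,2); (1,0,0,3); (1,1,3,0); (1,2,1,2); (1,3,4,4); (1,4,2,1)];
 [:: (0,1,3,2); (1,0,0,4); (1,1,3,1); (1,2,1,3); (1,3,4,0); (1,4,2,2)];
 [:: (0,1,3,2); (1,0,1,0); (1,1,4,2); (1,2,2,4); (1,3,0,1); (1,4,3,3)];
 [:: (0,1,3,2); (1,0,1,1); (1,1,4,3); (1,2,2,0); (1,3,0,2); (1,4,3,4)];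
 [:: (0,1,3,2); (1,0,1,2); (1,1,4,4); (1,2,2,1); (1,3,0,3); (1,4,3,0)];
 [:: (0,1,3,2); (1,0,1,3); (1,1,4,0); (1,2,2,2); (1,3,0,4); (1,4,3,1)];
 [:: (0,1,3,2); (1,0,1,4); (1,1,4,1); (1,2,2,3); (1,3,0,0); (1,4,3,2)];
 [:: (0,1,3,2); (1,0,2,0); (1,1,0,2); (1,2,3,4); (1,3,1,1); (1,4,4,3)];
 [:: (0,1,3,2); (1,0,2,1); (1,1,0,3); (1,2,3,0); (1,3,1,2); (1,4,4,4)];
 [:: (0,1,3,2); (1,0,2,2); (1,1,0,4); (1,2,3,1); (1,3,1,3); (1,4,4,0)];
 [:: (0,1,3,2); (1,0,2,3); (1,1,0,0); (1,2,3,2); (1,3,1,4); (1,4,4,1)];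
 [:: (0,1,3,2); (1,0,2,4); (1,1,0,1); (1,2,3,3); (1,3,1,0); (1,4,4,2)];
 [:: (0,1,3,2); (1,0,3,0); (1,1,1,2); (1,2,4,4); (1,3,2,1); (1,4,0,3)];
 [:: (0,1,3,2); (1,0,3,1); (1,1,1,3); (1,2,4,0); (1,3,2,2); (1,4,0,4)];
 [:: (0,1,3,2); (1,0,3,2); (1,1,1,4); (1,2,4,1); (1,3,2,3); (1,4,0,0)];
 [:: (0,1,3,2); (1,0,3,3); (1,1,1,0); (1,2,4,2); (1,3,2,4); (1,4,0,1)];
 [:: (0,1,3,2); (1,0,3,4); (1,1,1,1); (1,2,4,3); (1,3,2,0); (1,4,0,2)];
 [:: (0,1,3,2); (1,0,4,0); (1,1,2,2); (1,2,0,4); (1,3,3,1); (1,4,1,3)];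
 [:: (0,1,3,2); (1,0,4,1); (1,1,2,3); (1,2,0,0); (1,3,3,2); (1,4,1,4)];
 [:: (0,1,3,2); (1,0,4,2); (1,1,2,4); (1,2,0,1); (1,3,3,3); (1,4,1,0)];
 [:: (0,1,3,2); (1,0,4,3); (1,1,2,0); (1,2,0,2); (1,3,3,4); (1,4,1,1)];
 [:: (0,1,3,2); (1,0,4,4); (1,1,2,1); (1,2,0,3); (1,3,3,0); (1,4,1,2)];
 [:: (0,1,3,3); (1,0,0,0); (1,1,3,3); (1,2,1,1); (1,3,4,4); (1,4,2,2)];
 [:: (0,1,3,3); (1,0,0,1); (1,1,3,4); (1,2,1,2); (1,3,4,0); (1,4,2,3)];
 [:: (0,1,3,3); (1,0,0,2); (1,1,3,0); (1,2,1,3); (1,3,4,1); (1,4,2,4)];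
 [:: (0,1,3,3); (1,0,0,3); (1,1,3,1); (1,2,1,4); (1,3,4,2); (1,4,2,0)];
 [:: (0,1,3,3); (1,0,0,4); (1,1,3,2); (1,2,1,0); (1,3,4,3); (1,4,2,1)];
 [:: (0,1,3,3); (1,0,1,0); (1,1,4,3); (1,2,2,1); (1,3,0,4); (1,4,3,2)];
 [:: (0,1,3,3); (1,0,1,1); (1,1,4,4); (1,2,2,2); (1,3,0,0); (1,4,3,3)];
 [:: (0,1,3,3); (1,0,1,2); (1,1,4,0); (1,2,2,3); (1,3,0,1); (1,4,3,4)];
 [:: (0,1,3,3); (1,0,1,3); (1,1,4,1); (1,2,2,4); (1,3,0,2); (1,4,3,0)];
 [:: (0,1,3,3); (1,0,1,4); (1,1,4,2); (1,2,2,0); (1,3,0,3); (1,4,3,1)];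
 [:: (0,1,3,3); (1,0,2,0); (1,1,0,3); (1,2,3,1); (1,3,1,4); (1,4,4,2)];
 [:: (0,1,3,3); (1,0,2,1); (1,1,0,4); (1,2,3,2); (1,3,1,0); (1,4,4,3)];
 [:: (0,1,3,3); (1,0,2,2); (1,1,0,0); (1,2,3,3); (1,3,1,1); (1,4,4,4)];
 [:: (0,1,3,3); (1,0,2,3); (1,1,0,1); (1,2,3,4); (1,3,1,2); (1,4,4,0)];
 [:: (0,1,3,3); (1,0,2,4); (1,1,0,2); (1,2,3,0); (1,3,1,3); (1,4,4,1)];
 [:: (0,1,3,3); (1,0,3,0); (1,1,1,3); (1,2,4,1); (1,3,2,4); (1,4,0,2)];
 [:: (0,1,3,3); (1,0,3,1); (1,1,1,4); (1,2,4,2); (1,3,2,0); (1,4,0,3)];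
 [:: (0,1,3,3); (1,0,3,2); (1,1,1,0); (1,2,4,3); (1,3,2,1); (1,4,0,4)];
 [:: (0,1,3,3); (1,0,3,3); (1,1,1,1); (1,2,4,4); (1,3,2,2); (1,4,0,0)];
 [:: (0,1,3,3); (1,0,3,4); (1,1,1,2); (1,2,4,0); (1,3,2,3); (1,4,0,1)];
 [:: (0,1,3,3); (1,0,4,0); (1,1,2,3); (1,2,0,1); (1,3,3,4); (1,4,1,2)];
 [:: (0,1,3,3); (1,0,4,1); (1,1,2,4); (1,2,0,2); (1,3,3,0); (1,4,1,3)];
 [:: (0,1,3,3); (1,0,4,2); (1,1,2,0); (1,2,0,3); (1,3,3,1); (1,4,1,4)];
 [:: (0,1,3,3); (1,0,4,3); (1,1,2,1); (1,2,0,4); (1,3,3,2); (1,4,1,0)];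
 [:: (0,1,3,3); (1,0,4,4); (1,1,2,2); (1,2,0,0); (1,3,3,3); (1,4,1,1)];
 [:: (0,1,3,4); (1,0,0,0); (1,1,3,4); (1,2,1,3); (1,3,4,2); (1,4,2,1)];
 [:: (0,1,3,4); (1,0,0,1); (1,1,3,0); (1,2,1,4); (1,3,4,3); (1,4,2,2)];
 [:: (0,1,3,4); (1,0,0,2); (1,1,3,1); (1,2,1,0); (1,3,4,4); (1,4,2,3)];
 [:: (0,1,3,4); (1,0,0,3); (1,1,3,2); (1,2,1,1); (1,3,4,0); (1,4,2,4)];
 [:: (0,1,3,4); (1,0,0,4); (1,1,3,3); (1,2,1,2); (1,3,4,1); (1,4,2,0)];
 [:: (0,1,3,4); (1,0,1,0); (1,1,4,4); (1,2,2,3); (1,3,0,2); (1,4,3,1)];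
 [:: (0,1,3,4); (1,0,1,1); (1,1,4,0); (1,2,2,4); (1,3,0,3); (1,4,3,2)];
 [:: (0,1,3,4); (1,0,1,2); (1,1,4,1); (1,2,2,0); (1,3,0,4); (1,4,3,3)];
 [:: (0,1,3,4); (1,0,1,3); (1,1,4,2); (1,2,2,1); (1,3,0,0); (1,4,3,4)];
 [:: (0,1,3,4); (1,0,1,4); (1,1,4,3); (1,2,2,2); (1,3,0,1); (1,4,3,0)];
 [:: (0,1,3,4); (1,0,2,0); (1,1,0,4); (1,2,3,3); (1,3,1,2); (1,4,4,1)];
 [:: (0,1,3,4); (1,0,2,1); (1,1,0,0); (1,2,3,4); (1,3,1,3); (1,4,4,2)];
 [:: (0,1,3,4); (1,0,2,2); (1,1,0,1); (1,2,3,0); (1,3,1,4); (1,4,4,3)];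
 [:: (0,1,3,4); (1,0,2,3); (1,1,0,2); (1,2,3,1); (1,3,1,0); (1,4,4,4)];
 [:: (0,1,3,4); (1,0,2,4); (1,1,0,3); (1,2,3,2); (1,3,1,1); (1,4,4,0)];
 [:: (0,1,3,4); (1,0,3,0); (1,1,1,4); (1,2,4,3); (1,3,2,2); (1,4,0,1)];
 [:: (0,1,3,4); (1,0,3,1); (1,1,1,0); (1,2,4,4); (1,3,2,3); (1,4,0,2)];
 [:: (0,1,3,4); (1,0,3,2); (1,1,1,1); (1,2,4,0); (1,3,2,4); (1,4,0,3)];
 [:: (0,1,3,4); (1,0,3,3); (1,1,1,2); (1,2,4,1); (1,3,2,0); (1,4,0,4)];
 [:: (0,1,3,4); (1,0,3,4); (1,1,1,3); (1,2,4,2); (1,3,2,1); (1,4,0,0)];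
 [:: (0,1,3,4); (1,0,4,0); (1,1,2,4); (1,2,0,3); (1,3,3,2); (1,4,1,1)];
 [:: (0,1,3,4); (1,0,4,1); (1,1,2,0); (1,2,0,4); (1,3,3,3); (1,4,1,2)];
 [:: (0,1,3,4); (1,0,4,2); (1,1,2,1); (1,2,0,0); (1,3,3,4); (1,4,1,3)];
 [:: (0,1,3,4); (1,0,4,3); (1,1,2,2); (1,2,0,1); (1,3,3,0); (1,4,1,4)];
 [:: (0,1,3,4); (1,0,4,4); (1,1,2,3); (1,2,0,2); (1,3,3,1); (1,4,1,0)];
 [:: (0,1,4,0); (1,0,0,0); (1,1,4,0); (1,2,3,0); (1,3,2,0); (1,4,1,0)];
 [:: (0,1,4,0); (1,0,0,1); (1,1,4,1); (1,2,3,1); (1,3,2,1); (1,4,1,1)];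
 [:: (0,1,4,0); (1,0,0,2); (1,1,4,2); (1,2,3,2); (1,3,2,2); (1,4,1,2)];
 [:: (0,1,4,0); (1,0,0,3); (1,1,4,3); (1,2,3,3); (1,3,2,3); (1,4,1,3)];
 [:: (0,1,4,0); (1,0,0,4); (1,1,4,4); (1,2,3,4); (1,3,2,4); (1,4,1,4)];
 [:: (0,1,4,0); (1,0,1,0); (1,1,0,0); (1,2,4,0); (1,3,3,0); (1,4,2,0)];
 [:: (0,1,4,0); (1,0,1,1); (1,1,0,1); (1,2,4,1); (1,3,3,1); (1,4,2,1)];
 [:: (0,1,4,0); (1,0,1,2); (1,1,0,2); (1,2,4,2); (1,3,3,2); (1,4,2,2)];
 [:: (0,1,4,0); (1,0,1,3); (1,1,0,3); (1,2,4,3); (1,3,3,3); (1,4,2,3)];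
 [:: (0,1,4,0); (1,0,1,4); (1,1,0,4); (1,2,4,4); (1,3,3,4); (1,4,2,4)];
 [:: (0,1,4,0); (1,0,2,0); (1,1,1,0); (1,2,0,0); (1,3,4,0); (1,4,3,0)];
 [:: (0,1,4,0); (1,0,2,1); (1,1,1,1); (1,2,0,1); (1,3,4,1); (1,4,3,1)];
 [:: (0,1,4,0); (1,0,2,2); (1,1,1,2); (1,2,0,2); (1,3,4,2); (1,4,3,2)];
 [:: (0,1,4,0); (1,0,2,3); (1,1,1,3); (1,2,0,3); (1,3,4,3); (1,4,3,3)];
 [:: (0,1,4,0); (1,0,2,4); (1,1,1,4); (1,2,0,4); (1,3,4,4); (1,4,3,4)];
 [:: (0,1,4,0); (1,0,3,0); (1,1,2,0); (1,2,1,0); (1,3,0,0); (1,4,4,0)];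
 [:: (0,1,4,0); (1,0,3,1); (1,1,2,1); (1,2,1,1); (1,3,0,1); (1,4,4,1)];
 [:: (0,1,4,0); (1,0,3,2); (1,1,2,2); (1,2,1,2); (1,3,0,2); (1,4,4,2)];
 [:: (0,1,4,0); (1,0,3,3); (1,1,2,3); (1,2,1,3); (1,3,0,3); (1,4,4,3)];
 [:: (0,1,4,0); (1,0,3,4); (1,1,2,4); (1,2,1,4); (1,3,0,4); (1,4,4,4)];
 [:: (0,1,4,0); (1,0,4,0); (1,1,3,0); (1,2,2,0); (1,3,1,0); (1,4,0,0)];
 [:: (0,1,4,0); (1,0,4,1); (1,1,3,1); (1,2,2,1); (1,3,1,1); (1,4,0,1)];
 [:: (0,1,4,0); (1,0,4,2); (1,1,3,2); (1,2,2,2); (1,3,1,2); (1,4,0,2)];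
 [:: (0,1,4,0); (1,0,4,3); (1,1,3,3); (1,2,2,3); (1,3,1,3); (1,4,0,3)];
 [:: (0,1,4,0); (1,0,4,4); (1,1,3,4); (1,2,2,4); (1,3,1,4); (1,4,0,4)];
 [:: (0,1,4,1); (1,0,0,0); (1,1,4,1); (1,2,3,2); (1,3,2,3); (1,4,1,4)];
 [:: (0,1,4,1); (1,0,0,1); (1,1,4,2); (1,2,3,3); (1,3,2,4); (1,4,1,0)];
 [:: (0,1,4,1); (1,0,0,2); (1,1,4,3); (1,2,3,4); (1,3,2,0); (1,4,1,1)];
 [:: (0,1,4,1); (1,0,0,3); (1,1,4,4); (1,2,3,0); (1,3,2,1); (1,4,1,2)];
 [:: (0,1,4,1); (1,0,0,4); (1,1,4,0); (1,2,3,1); (1,3,2,2); (1,4,1,3)];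
 [:: (0,1,4,1); (1,0,1,0); (1,1,0,1); (1,2,4,2); (1,3,3,3); (1,4,2,4)];
 [:: (0,1,4,1); (1,0,1,1); (1,1,0,2); (1,2,4,3); (1,3,3,4); (1,4,2,0)];
 [:: (0,1,4,1); (1,0,1,2); (1,1,0,3); (1,2,4,4); (1,3,3,0); (1,4,2,1)];
 [:: (0,1,4,1); (1,0,1,3); (1,1,0,4); (1,2,4,0); (1,3,3,1); (1,4,2,2)];
 [:: (0,1,4,1); (1,0,1,4); (1,1,0,0); (1,2,4,1); (1,3,3,2); (1,4,2,3)];
 [:: (0,1,4,1); (1,0,2,0); (1,1,1,1); (1,2,0,2); (1,3,4,3); (1,4,3,4)];
 [:: (0,1,4,1); (1,0,2,1); (1,1,1,2); (1,2,0,3); (1,3,4,4); (1,4,3,0)];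
 [:: (0,1,4,1); (1,0,2,2); (1,1,1,3); (1,2,0,4); (1,3,4,0); (1,4,3,1)];
 [:: (0,1,4,1); (1,0,2,3); (1,1,1,4); (1,2,0,0); (1,3,4,1); (1,4,3,2)];
 [:: (0,1,4,1); (1,0,2,4); (1,1,1,0); (1,2,0,1); (1,3,4,2); (1,4,3,3)];
 [:: (0,1,4,1); (1,0,3,0); (1,1,2,1); (1,2,1,2); (1,3,0,3); (1,4,4,4)];
 [:: (0,1,4,1); (1,0,3,1); (1,1,2,2); (1,2,1,3); (1,3,0,4); (1,4,4,0)];
 [:: (0,1,4,1); (1,0,3,2); (1,1,2,3); (1,2,1,4); (1,3,0,0); (1,4,4,1)];
 [:: (0,1,4,1); (1,0,3,3); (1,1,2,4); (1,2,1,0); (1,3,0,1); (1,4,4,2)];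
 [:: (0,1,4,1); (1,0,3,4); (1,1,2,0); (1,2,1,1); (1,3,0,2); (1,4,4,3)];
 [:: (0,1,4,1); (1,0,4,0); (1,1,3,1); (1,2,2,2); (1,3,1,3); (1,4,0,4)];
 [:: (0,1,4,1); (1,0,4,1); (1,1,3,2); (1,2,2,3); (1,3,1,4); (1,4,0,0)];
 [:: (0,1,4,1); (1,0,4,2); (1,1,3,3); (1,2,2,4); (1,3,1,0); (1,4,0,1)];
 [:: (0,1,4,1); (1,0,4,3); (1,1,3,4); (1,2,2,0); (1,3,1,1); (1,4,0,2)];
 [:: (0,1,4,1); (1,0,4,4); (1,1,3,0); (1,2,2,1); (1,3,1,2); (1,4,0,3)];
 [:: (0,1,4,2); (1,0,0,0); (1,1,4,2); (1,2,3,4); (1,3,2,1); (1,4,1,3)];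
 [:: (0,1,4,2); (1,0,0,1); (1,1,4,3); (1,2,3,0); (1,3,2,2); (1,4,1,4)];
 [:: (0,1,4,2); (1,0,0,2); (1,1,4,4); (1,2,3,1); (1,3,2,3); (1,4,1,0)];
 [:: (0,1,4,2); (1,0,0,3); (1,1,4,0); (1,2,3,2); (1,3,2,4); (1,4,1,1)];
 [:: (0,1,4,2); (1,0,0,4); (1,1,4,1); (1,2,3,3); (1,3,2,0); (1,4,1,2)];
 [:: (0,1,4,2); (1,0,1,0); (1,1,0,2); (1,2,4,4); (1,3,3,1); (1,4,2,3)];
 [:: (0,1,4,2); (1,0,1,1); (1,1,0,3); (1,2,4,0); (1,3,3,2); (1,4,2,4)];
 [:: (0,1,4,2); (1,0,1,2); (1,1,0,4); (1,2,4,1); (1,3,3,3); (1,4,2,0)];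
 [:: (0,1,4,2); (1,0,1,3); (1,1,0,0); (1,2,4,2); (1,3,3,4); (1,4,2,1)];
 [:: (0,1,4,2); (1,0,1,4); (1,1,0,1); (1,2,4,3); (1,3,3,0); (1,4,2,2)];
 [:: (0,1,4,2); (1,0,2,0); (1,1,1,2); (1,2,0,4); (1,3,4,1); (1,4,3,3)];
 [:: (0,1,4,2); (1,0,2,1); (1,1,1,3); (1,2,0,0); (1,3,4,2); (1,4,3,4)];
 [:: (0,1,4,2); (1,0,2,2); (1,1,1,4); (1,2,0,1); (1,3,4,3); (1,4,3,0)];
 [:: (0,1,4,2); (1,0,2,3); (1,1,1,0); (1,2,0,2); (1,3,4,4); (1,4,3,1)];
 [:: (0,1,4,2); (1,0,2,4); (1,1,1,1); (1,2,0,3); (1,3,4,0); (1,4,3,2)];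
 [:: (0,1,4,2); (1,0,3,0); (1,1,2,2); (1,2,1,4); (1,3,0,1); (1,4,4,3)];
 [:: (0,1,4,2); (1,0,3,1); (1,1,2,3); (1,2,1,0); (1,3,0,2); (1,4,4,4)];
 [:: (0,1,4,2); (1,0,3,2); (1,1,2,4); (1,2,1,1); (1,3,0,3); (1,4,4,0)];
 [:: (0,1,4,2); (1,0,3,3); (1,1,2,0); (1,2,1,2); (1,3,0,4); (1,4,4,1)];
 [:: (0,1,4,2); (1,0,3,4); (1,1,2,1); (1,2,1,3); (1,3,0,0); (1,4,4,2)];
 [:: (0,1,4,2); (1,0,4,0); (1,1,3,2); (1,2,2,4); (1,3,1,1); (1,4,0,3)];
 [:: (0,1,4,2); (1,0,4,1); (1,1,3,3); (1,2,2,0); (1,3,1,2); (1,4,0,4)];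
 [:: (0,1,4,2); (1,0,4,2); (1,1,3,4); (1,2,2,1); (1,3,1,3); (1,4,0,0)];
 [:: (0,1,4,2); (1,0,4,3); (1,1,3,0); (1,2,2,2); (1,3,1,4); (1,4,0,1)];
 [:: (0,1,4,2); (1,0,4,4); (1,1,3,1); (1,2,2,3); (1,3,1,0); (1,4,0,2)];
 [:: (0,1,4,3); (1,0,0,0); (1,1,4,3); (1,2,3,1); (1,3,2,4); (1,4,1,2)];
 [:: (0,1,4,3); (1,0,0,1); (1,1,4,4); (1,2,3,2); (1,3,2,0); (1,4,1,3)];
 [:: (0,1,4,3); (1,0,0,2); (1,1,4,0); (1,2,3,3); (1,3,2,1); (1,4,1,4)];
 [:: (0,1,4,3); (1,0,0,3); (1,1,4,1); (1,2,3,4); (1,3,2,2); (1,4,1,0)];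
 [:: (0,1,4,3); (1,0,0,4); (1,1,4,2); (1,2,3,0); (1,3,2,3); (1,4,1,1)];
 [:: (0,1,4,3); (1,0,1,0); (1,1,0,3); (1,2,4,1); (1,3,3,4); (1,4,2,2)];
 [:: (0,1,4,3); (1,0,1,1); (1,1,0,4); (1,2,4,2); (1,3,3,0); (1,4,2,3)];
 [:: (0,1,4,3); (1,0,1,2); (1,1,0,0); (1,2,4,3); (1,3,3,1); (1,4,2,4)];
 [:: (0,1,4,3); (1,0,1,3); (1,1,0,1); (1,2,4,4); (1,3,3,2); (1,4,2,0)];
 [:: (0,1,4,3); (1,0,1,4); (1,1,0,2); (1,2,4,0); (1,3,3,3); (1,4,2,1)];
 [:: (0,1,4,3); (1,0,2,0); (1,1,1,3); (1,2,0,1); (1,3,4,4); (1,4,3,2)];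
 [:: (0,1,4,3); (1,0,2,1); (1,1,1,4); (1,2,0,2); (1,3,4,0); (1,4,3,3)];
 [:: (0,1,4,3); (1,0,2,2); (1,1,1,0); (1,2,0,3); (1,3,4,1); (1,4,3,4)];
 [:: (0,1,4,3); (1,0,2,3); (1,1,1,1); (1,2,0,4); (1,3,4,2); (1,4,3,0)];
 [:: (0,1,4,3); (1,0,2,4); (1,1,1,2); (1,2,0,0); (1,3,4,3); (1,4,3,1)];
 [:: (0,1,4,3); (1,0,3,0); (1,1,2,3); (1,2,1,1); (1,3,0,4); (1,4,4,2)];
 [:: (0,1,4,3); (1,0,3,1); (1,1,2,4); (1,2,1,2); (1,3,0,0); (1,4,4,3)];
 [:: (0,1,4,3); (1,0,3,2); (1,1,2,0); (1,2,1,3); (1,3,0,1); (1,4,4,4)];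
 [:: (0,1,4,3); (1,0,3,3); (1,1,2,1); (1,2,1,4); (1,3,0,2); (1,4,4,0)];
 [:: (0,1,4,3); (1,0,3,4); (1,1,2,2); (1,2,1,0); (1,3,0,3); (1,4,4,1)];
 [:: (0,1,4,3); (1,0,4,0); (1,1,3,3); (1,2,2,1); (1,3,1,4); (1,4,0,2)];
 [:: (0,1,4,3); (1,0,4,1); (1,1,3,4); (1,2,2,2); (1,3,1,0); (1,4,0,3)];
 [:: (0,1,4,3); (1,0,4,2); (1,1,3,0); (1,2,2,3); (1,3,1,1); (1,4,0,4)];
 [:: (0,1,4,3); (1,0,4,3); (1,1,3,1); (1,2,2,4); (1,3,1,2); (1,4,0,0)];
 [:: (0,1,4,3); (1,0,4,4); (1,1,3,2); (1,2,2,0); (1,3,1,3); (1,4,0,1)];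
 [:: (0,1,4,4); (1,0,0,0); (1,1,4,4); (1,2,3,3); (1,3,2,2); (1,4,1,1)];
 [:: (0,1,4,4); (1,0,0,1); (1,1,4,0); (1,2,3,4); (1,3,2,3); (1,4,1,2)];
 [:: (0,1,4,4); (1,0,0,2); (1,1,4,1); (1,2,3,0); (1,3,2,4); (1,4,1,3)];
 [:: (0,1,4,4); (1,0,0,3); (1,1,4,2); (1,2,3,1); (1,3,2,0); (1,4,1,4)];
 [:: (0,1,4,4); (1,0,0,4); (1,1,4,3); (1,2,3,2); (1,3,2,1); (1,4,1,0)];
 [:: (0,1,4,4); (1,0,1,0); (1,1,0,4); (1,2,4,3); (1,3,3,2); (1,4,2,1)];
 [:: (0,1,4,4); (1,0,1,1); (1,1,0,0); (1,2,4,4); (1,3,3,3); (1,4,2,2)];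
 [:: (0,1,4,4); (1,0,1,2); (1,1,0,1); (1,2,4,0); (1,3,3,4); (1,4,2,3)];
 [:: (0,1,4,4); (1,0,1,3); (1,1,0,2); (1,2,4,1); (1,3,3,0); (1,4,2,4)];
 [:: (0,1,4,4); (1,0,1,4); (1,1,0,3); (1,2,4,2); (1,3,3,1); (1,4,2,0)];
 [:: (0,1,4,4); (1,0,2,0); (1,1,1,4); (1,2,0,3); (1,3,4,2); (1,4,3,1)];
 [:: (0,1,4,4); (1,0,2,1); (1,1,1,0); (1,2,0,4); (1,3,4,3); (1,4,3,2)];
 [:: (0,1,4,4); (1,0,2,2); (1,1,1,1); (1,2,0,0); (1,3,4,4); (1,4,3,3)];
 [:: (0,1,4,4); (1,0,2,3); (1,1,1,2); (1,2,0,1); (1,3,4,0); (1,4,3,4)];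
 [:: (0,1,4,4); (1,0,2,4); (1,1,1,3); (1,2,0,2); (1,3,4,1); (1,4,3,0)];
 [:: (0,1,4,4); (1,0,3,0); (1,1,2,4); (1,2,1,3); (1,3,0,2); (1,4,4,1)];
 [:: (0,1,4,4); (1,0,3,1); (1,1,2,0); (1,2,1,4); (1,3,0,3); (1,4,4,2)];
 [:: (0,1,4,4); (1,0,3,2); (1,1,2,1); (1,2,1,0); (1,3,0,4); (1,4,4,3)];
 [:: (0,1,4,4); (1,0,3,3); (1,1,2,2); (1,2,1,1); (1,3,0,0); (1,4,4,4)];
 [:: (0,1,4,4); (1,0,3,4); (1,1,2,3); (1,2,1,2); (1,3,0,1); (1,4,4,0)];
 [:: (0,1,4,4); (1,0,4,0); (1,1,3,4); (1,2,2,3); (1,3,1,2); (1,4,0,1)];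
 [:: (0,1,4,4); (1,0,4,1); (1,1,3,0); (1,2,2,4); (1,3,1,3); (1,4,0,2)];
 [:: (0,1,4,4); (1,0,4,2); (1,1,3,1); (1,2,2,0); (1,3,1,4); (1,4,0,3)];
 [:: (0,1,4,4); (1,0,4,3); (1,1,3,2); (1,2,2,1); (1,3,1,0); (1,4,0,4)];
 [:: (0,1,4,4); (1,0,4,4); (1,1,3,3); (1,2,2,2); (1,3,1,1); (1,4,0,0)]].
Definition dotv (u v : vec) : nat :=
  let: (a,b,c,d) := u in let: (a',b',c',d') := v in a*a' + b*b' + c*c' + d*d'.
Definition incv (u v : vec) : bool := dotv u v %% 5 == 0.
Lemma incvC u v : incv u v = incv v u.
Proof. by case: u => [[[a b] c] d]; case: v => [[[a' b'] c'] d']; rewrite /incv /dotv !(mulnC a) !(mulnC b) !(mulnC c) !(mulnC d). Qed.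

Definition chk_size := (size PTS == 156) && (size LNS == 806) && uniq PTS.
Definition chk_pl31 := all (fun h => count (incv h) PTS == 31) PTS.
Definition chk_line6 := all (fun l => count (fun x => x \in l) PTS == 6) LNS.
Definition chk_lines_in := all (fun l => uniq l && all (fun x => x \in PTS) l) LNS.
Definition chk_join := all (fun x => let Lx := [seq l <- LNS | x \in l] in
   all (fun y => (x == y) || (count (fun l => y \in l) Lx == 1)) PTS) PTS.
Definition chk_sub2 := all (fun l => all (fun h => all (incv h) l || (count (incv h) l <= 1)) PTS) LNS.
Definition chk_pencil := all (fun l => let hs := [seq h <- PTS | all (incv h) l] in
   (size hs == 6) && all (fun x => (x \in l) || (count (incv^~ x) hs == 1)) PTS) LNS.

Lemma chk_size_ok : chk_size. Proof. by vm_compute. Qed.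
Lemma chk_pl31_ok : chk_pl31. Proof. by vm_compute. Qed.
Lemma chk_line6_ok : chk_line6. Proof. by vm_compute. Qed.
Lemma chk_lines_in_ok : chk_lines_in. Proof. by vm_compute. Qed.
Lemma chk_join_ok : chk_join. Proof. by vm_compute. Qed.
Lemma chk_sub2_ok : chk_sub2. Proof. by vm_compute. Qed.
Lemma chk_pencil_ok : chk_pencil. Proof. by vm_compute. Qed.


Definition vsmall (v : vec) : bool :=
  let: (a,b,c,d) := v in [&& a < 5, b < 5, c < 5, d < 5 & a + b + c + d != 0].
Definition scalev (l : nat) (v : vec) : vec :=
  let: (a,b,c,d) := v in (l * a %% 5, l * b %% 5, l * c %% 5, l * d %% 5).
Definition addv (u v : vec) : vec :=
  let: (a,b,c,d) := u in let: (a',b',c',d') := v in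
  ((a + a') %% 5, (b + b') %% 5, (c + c') %% 5, (d + d') %% 5).
Definition chk_small := all vsmall PTS.
Definition I5 := iota 0 5.
Definition chk_surj := all (fun a => all (fun b => all (fun c => all (fun d =>
  ((a,b,c,d) == (0,0,0,0)) || has (fun l => scalev l (a,b,c,d) \in PTS) [:: 1; 2; 3; 4]) I5) I5) I5) I5.
Definition chk_inj := all (fun x => all (fun y => (x == y) || ~~ has (fun l => scalev l y == x) I5) PTS) PTS.
Definition chk_span := all (fun l => if l is a :: b :: _ then
   all (fun c => has (fun al => has (fun be => addv (scalev al a) (scalev be b) == c) I5) I5) l
   else false) LNS.
Lemma chk_small_ok : chk_small. Proof. by vm_compute. Qed.
Lemma chk_surj_ok : chk_surj. Proof. by vm_compute. Qed.
Lemma chk_inj_ok : chk_inj. Proof. by vm_compute. Qed.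
Lemma chk_span_ok : chk_span. Proof. by vm_compute. Qed.

Lemma size_PTS : size PTS = 156. Proof. by have /andP[/andP[/eqP -> _] _] := chk_size_ok. Qed.
Lemma size_LNS : size LNS = 806. Proof. by have /andP[/andP[_ /eqP ->] _] := chk_size_ok. Qed.
Lemma uniq_PTS : uniq PTS. Proof. by have /andP[_ ->] := chk_size_ok. Qed.

Definition v0 : vec := (0,0,0,0).
Definition vp (p : 'I_156) : vec := nth v0 PTS p.
Definition lnl (m : 'I_806) : seq vec := nth [::] LNS m.
Definition incc (p h : 'I_156) := incv (vp p) (vp h).
Definition onlc (x : 'I_156) (m : 'I_806) := vp x \in lnl m.

Lemma card_nth (T : Type) (d : T) (s : seq T) n (Hs : size s = n) (Q : pred T) :
  #|[set i : 'I_n | Q (nth d s i)]| = count Q s.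
Proof.
rewrite -sum1_card (eq_bigl (fun i : 'I_n => Q (nth d s i))); last by move=> i; rewrite inE.
by rewrite -(big_mkord (fun k => Q (nth d s k)) (fun _ => 1)) -Hs -(big_nth d Q (fun _ => 1)) sum1_count.
Qed.

Lemma vp_in p : vp p \in PTS. Proof. by rewrite /vp mem_nth // size_PTS. Qed.
Lemma lnl_in m : lnl m \in LNS. Proof. by rewrite /lnl mem_nth // size_LNS. Qed.

Lemma vp_inj : injective vp.
Proof.
move=> p q E; apply/val_inj/eqP.
have Hp : p < size PTS by rewrite size_PTS.
have Hq : q < size PTS by rewrite size_PTS.
rewrite -(nth_uniq v0 Hp Hq uniq_PTS); apply/eqP; exact: E.
Qed.

Lemma vp_surj v : v \in PTS -> exists p, vp p = v.
Proof.
move=> vP; have Hi : index v PTS < 156 by rewrite -size_PTS index_mem.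
by exists (Ordinal Hi); rewrite /vp nth_index.
Qed.

Lemma Hpl31c h : #|[set x | incc x h]| = 31.
Proof.
rewrite /incc (card_nth v0 size_PTS (fun v => incv v (vp h))).
have := allP chk_pl31_ok _ (vp_in h); move/eqP <-; apply: eq_count => v; exact: incvC.
Qed.

Lemma Hpt31c p : #|[set h | incc p h]| = 31.
Proof.
rewrite /incc (card_nth v0 size_PTS (fun v => incv (vp p) v)).
by have := allP chk_pl31_ok _ (vp_in p); move/eqP <-.
Qed.

Lemma Hl6c m : #|[set x | onlc x m]| = 6.
Proof.
rewrite /onlc (card_nth v0 size_PTS (fun v => v \in lnl m)).
by have := allP chk_line6_ok _ (lnl_in m); move/eqP.
Qed.

Lemma Hjoinc x y : x != y -> #|[set m | onlc x m && onlc y m]| = 1.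
Proof.
move=> xy; rewrite /onlc (card_nth [::] size_LNS (fun l => (vp x \in l) && (vp y \in l))).
move/allP: (allP chk_join_ok _ (vp_in x)) => /(_ _ (vp_in y)).
have -> : (vp x == vp y) = false by apply/negbTE; apply: contra xy => /eqP /vp_inj ->.
rewrite orFb count_filter => /eqP <-; apply: eq_count => l; by rewrite /= andbC.
Qed.

Lemma subcE m h : sub incc onlc m h = all (incv^~ (vp h)) (lnl m).
Proof.
apply/forallP/allP => [H v vl|H x].
  have /andP[_ /allP /(_ v vl) vP] := allP chk_lines_in_ok _ (lnl_in m).
  have [x Hx] := vp_surj vP; have := H x; rewrite /onlc /incc Hx vl; by [].
by apply/implyP => xm; apply: H.
Qed.

Lemma count2 (T : eqType) (l : seq T) (P : pred T) a b :
  uniq l -> a \in l -> b \in l -> a != b -> P a -> P b -> 1 < count P l.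
Proof.
move=> ul al bl ab Pa Pb; rewrite -size_filter.
have : size [:: a; b] <= size [seq x <- l | P x].
  apply: uniq_leq_size; first by rewrite /= inE ab.
  by move=> z; rewrite !inE mem_filter => /orP[] /eqP ->; rewrite ?Pa ?Pb.
by [].
Qed.

Lemma Hsub2c m h x y : x != y -> onlc x m -> onlc y m -> incc x h -> incc y h -> sub incc onlc m h.
Proof.
move=> xy xm ym xh yh; rewrite subcE.
have /andP[ul _] := allP chk_lines_in_ok _ (lnl_in m).
have := allP chk_sub2_ok _ (lnl_in m) => /allP /(_ _ (vp_in h)) /orP[Hall|Hc].
  by apply/allP => v vl; rewrite incvC; apply: (allP Hall).
have vxy : vp x != vp y by apply: contra xy => /eqP /vp_inj ->.
rewrite /incc in xh yh; have := count2 (P := incv (vp h)) ul xm ym vxy; rewrite incvC xh incvC yh => /(_ isT isT).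
by rewrite ltnNge Hc.
Qed.

Lemma Hpen6c m : #|[set h | sub incc onlc m h]| = 6.
Proof.
rewrite (eq_card (B := [set h | all (incv^~ (vp h)) (lnl m)])); last first.
  by move=> h; rewrite !inE subcE.
rewrite (card_nth v0 size_PTS (fun v => all (incv^~ v) (lnl m))).
have /andP[/eqP <- _] := allP chk_pencil_ok _ (lnl_in m).
rewrite size_filter; apply: eq_count => v /=; apply: eq_all => u; exact: incvC.
Qed.

Lemma Hpen1c m x : ~~ onlc x m -> #|[set h | sub incc onlc m h && incc x h]| = 1.
Proof.
move=> xm.
rewrite (eq_card (B := [set h | all (incv^~ (vp h)) (lnl m) && incv (vp x) (vp h)])); last first.
  by move=> h; rewrite !inE subcE.
rewrite (card_nth v0 size_PTS (fun v => all (incv^~ v) (lnl m) && incv (vp x) v)).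
have /andP[_ /allP /(_ _ (vp_in x))] := allP chk_pencil_ok _ (lnl_in m).
rewrite /onlc in xm; rewrite (negbTE xm) orFb count_filter => /eqP <-; apply: eq_count => v.
rewrite /predI /= andbC incvC; congr (_ && _); apply: eq_all => u; exact: incvC.
Qed.

Import GRing.Theory.
Arguments vp : simpl never.
Arguments lnl : simpl never.

Lemma pr5 : prime 5. Proof. by []. Qed.

Local Open Scope ring_scope.

Definition coords (v : vec) : seq nat := let: (a,b,c,d) := v in [:: a; b; c; d].
Definition rv (v : vec) : 'rV['F_5]_4 := \row_(i < 4) ((nth 0%N (coords v) i)%:R).
Definition small4 (v : vec) : bool := let: (a,b,c,d) := v in [&& a < 5, b < 5, c < 5 & d < 5]%N.

Lemma F5_eq a b : (a%:R : 'F_5) = b%:R -> (a %% 5 = b %% 5)%N.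
Proof. by move/(congr1 (fun x : 'F_5 => nat_of_ord x)) => /=; rewrite !(val_Fp_nat pr5). Qed.

Lemma F5_eq0 a : (a%:R : 'F_5) = 0 -> (a %% 5 = 0)%N.
Proof. by move=> H; apply: (F5_eq (b:=0)); rewrite H. Qed.

Lemma F5_val (x : 'F_5) : x = (val x)%:R.
Proof. by rewrite natr_Zp. Qed.

Lemma mx11_eq0 (M : 'M['F_5]_1) : (M == 0) = (M 0 0 == 0).
Proof.
apply/eqP/eqP => [->|H]; first by rewrite mxE.
by apply/matrixP => i j; rewrite !ord1 H mxE.
Qed.

Lemma dot_rv u v : (rv u *m (rv v)^T) 0 0 = (dotv u v)%:R.
Proof.
case: u => [[[a b] c] d]; case: v => [[[a' b'] c'] d'].
rewrite !mxE !big_ord_recr big_ord0 /= !mxE /=.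
by rewrite !natrD !natrM add0r.
Qed.

Lemma modF5 n : ((n %% 5)%N%:R : 'F_5) = n%:R.
Proof. exact: (Fp_nat_mod pr5). Qed.

Lemma rv_scale l v : rv (scalev l v) = (l%:R : 'F_5) *: rv v.
Proof.
case: v => [[[a b] c] d]; apply/rowP => j; rewrite !mxE.
by case: j => [[|[|[|[|j]]]] Hj] //=; rewrite modF5 natrM.
Qed.

Lemma rv_add u v : rv (addv u v) = rv u + rv v.
Proof.
case: u => [[[a b] c] d]; case: v => [[[a' b'] c'] d']; apply/rowP => j; rewrite !mxE.
by case: j => [[|[|[|[|j]]]] Hj] //=; rewrite modF5 natrD.
Qed.

Lemma rv_inj u w : small4 u -> small4 w -> rv u = rv w -> u = w.
Proof.
case: u => [[[a b] c] d]; case: w => [[[a' b'] c'] d'] /and4P[? ? ? ?] /and4P[? ? ? ?].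
move/rowP => H.
have := H (@Ordinal 4 0 isT); have := H (@Ordinal 4 1 isT);
have := H (@Ordinal 4 2 isT); have := H (@Ordinal 4 3 isT).
rewrite !mxE /= => /F5_eq E3 /F5_eq E2 /F5_eq E1 /F5_eq E0.
by move: E0 E1 E2 E3; rewrite !modn_small // => -> -> -> ->.
Qed.

Lemma small_vp p : vsmall (vp p).
Proof. exact: (allP chk_small_ok _ (vp_in p)). Qed.

Lemma small4_vp p : small4 (vp p).
Proof. by have := small_vp p; case: (vp p) => [[[a b] c] d] /and5P[*]; apply/and4P. Qed.

Lemma small4_scale l v : small4 (scalev l v).
Proof. by case: v => [[[a b] c] d]; rewrite /small4 /scalev !ltn_pmod. Qed.

Lemma rv_neq0 p : rv (vp p) != 0.
Proof.
have := small_vp p; case: (vp p) => [[[a b] c] d] /and5P[a5 b5 c5 d5 nz].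
apply/negP => /eqP /rowP H.
have := H (@Ordinal 4 0 isT); have := H (@Ordinal 4 1 isT);
have := H (@Ordinal 4 2 isT); have := H (@Ordinal 4 3 isT).
rewrite !mxE /= => /F5_eq0 E3 /F5_eq0 E2 /F5_eq0 E1 /F5_eq0 E0.
move: E0 E1 E2 E3 nz; rewrite !modn_small // => -> -> -> ->; by [].
Qed.

Definition pt (p : 'I_156) : 'M['F_5]_4 := <<rv (vp p)>>%MS.
Definition pl (h : 'I_156) : 'M['F_5]_4 := <<kermx (rv (vp h))^T>>%MS.

Lemma incE p h : incident (pt p) (pl h) = incc p h.
Proof.
rewrite /incident /pt /pl !genmxE sub_kermx mx11_eq0 dot_rv /incc /incv.
by rewrite -val_eqE /= (val_Fp_nat pr5).
Qed.

Lemma pt_in p : pt p \in PGpoints 'F_5.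
Proof. by rewrite /PGpoints /subsp inE /pt genmx_id eqxx /= genmxE rank_rV rv_neq0. Qed.

Lemma pl_in h : pl h \in PGplanes 'F_5.
Proof.
by rewrite /PGplanes /subsp inE /pl genmx_id eqxx /= genmxE mxrank_ker mxrank_tr rank_rV rv_neq0.
Qed.

Lemma rv_val (v : 'rV['F_5]_4) :
  rv (val (v 0 0), val (v 0 1), val (v 0 2), val (v 0 3)) = v.
Proof.
apply/rowP => j; rewrite !mxE.
by case: j => [[|[|[|[|j]]]] Hj] //=; rewrite -F5_val; congr (v _ _); apply: val_inj.
Qed.

Lemma nz_F5 l : (0 < l < 5)%N -> (l%:R : 'F_5) != 0.
Proof.
move=> Hl; apply/eqP => /F5_eq0; rewrite modn_small; last by case/andP: Hl.
by move=> E; move: Hl; rewrite E.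
Qed.

Lemma pt_inj : injective pt.
Proof.
move=> p q E.
have : (<<rv (vp p)>> <= <<rv (vp q)>>)%MS by rewrite -/(pt p) E submx_refl.
rewrite !genmxE => /sub_rVP [x Hx].
have Hx' : rv (vp p) = rv (scalev (val x) (vp q)) by rewrite rv_scale -F5_val.
have E2 := rv_inj (small4_vp p) (small4_scale _ _) Hx'.
have := allP chk_inj_ok _ (vp_in p) => /allP /(_ _ (vp_in q)) /orP[/eqP /vp_inj //|].
move/hasPn => /(_ (val x)); rewrite mem_iota /= add0n ltn_ord => /(_ isT).
by rewrite E2 eqxx.
Qed.

Lemma pt_surj A : A \in PGpoints 'F_5 -> exists p, A = pt p.
Proof.
rewrite /PGpoints /subsp inE => /andP[/eqP gA /eqP rA].
set v := nz_row A.
have vA : (v <= A)%MS := nz_row_sub A.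
have v0 : v != 0.
  by rewrite nz_row_eq0; apply/eqP => A0; move: rA; rewrite A0 mxrank0.
have /eqmxP vA' : (v == A)%MS by rewrite -(mxrank_leqif_eq vA).2 rank_rV v0 rA.
have Av : A = <<v>>%MS by rewrite -gA; apply: eq_genmx; apply: eqmx_sym.
set n := (val (v 0 0), val (v 0 1), val (v 0 2), val (v 0 3)).
have rn : rv n = v by rewrite rv_val.
have := chk_surj_ok.
move=> /allP /(_ (val (v 0 0))); rewrite mem_iota add0n ltn_ord => /(_ isT).
move=> /allP /(_ (val (v 0 1))); rewrite mem_iota add0n ltn_ord => /(_ isT).
move=> /allP /(_ (val (v 0 2))); rewrite mem_iota add0n ltn_ord => /(_ isT).
move=> /allP /(_ (val (v 0 3))); rewrite mem_iota add0n ltn_ord => /(_ isT).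
rewrite -/n => /orP[/eqP n0|/hasP [l lI lP]].
  by move: v0; rewrite -rn n0 => /negP; case; apply/eqP/rowP => j; rewrite !mxE;
     case: j => [[|[|[|[|j]]]] Hj].
have [p Hp] := vp_surj lP.
exists p; rewrite Av /pt Hp rv_scale rn; apply: eq_genmx; apply: eqmx_sym.
apply: eqmx_scale; apply: nz_F5.
by move: lI; rewrite !inE => /or4P[] /eqP ->.
Qed.

Definition Lm (m : 'I_806) : 'M['F_5]_4 := <<(\sum_(x | onlc x m) pt x)%MS>>%MS.

Lemma incL y m : incident (pt y) (Lm m) = onlc y m.
Proof.
rewrite /incident /Lm (genmxE (\sum_(x | onlc x m) pt x)%MS); apply/idP/idP => [H|ym]; last first.
  by apply: (sumsmx_sup y) => //; exact: submx_refl.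
apply/negPn/negP => ym.
case: (boolP [exists h, sub incc onlc m h && ~~ incc y h]) => [/existsP [h /andP[mh yh]]|Hn].
  have : (\sum_(x | onlc x m) pt x <= pl h)%MS.
    by apply/sumsmx_subP => x xm; rewrite -/(incident _ _) incE (subP mh xm).
  by move/(submx_trans H); rewrite -/(incident _ _) incE (negbTE yh).
have : [set h | sub incc onlc m h] \subset [set h | sub incc onlc m h && incc y h].
  apply/subsetP => h; rewrite !inE => mh; rewrite mh /=.
  by move: Hn; rewrite negb_exists => /forallP /(_ h); rewrite mh /= negbK.
by move/subset_leq_card; rewrite Hpen6c Hpen1c.
Qed.

Lemma spanP l : l \in LNS -> exists a b r, l = a :: b :: r /\
  (forall c, c \in l -> exists al be, addv (scalev al a) (scalev be b) = c).
Proof.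
move=> /(allP chk_span_ok); case: l => [|a [|b r]] // H.
exists a, b, r; split => // c cl.
have /hasP [al _ /hasP [be _ /eqP E]] := allP H c cl.
by exists al, be.
Qed.

Lemma Lm_in m : Lm m \in PGlines 'F_5.
Proof.
rewrite /PGlines /subsp inE /Lm genmx_id eqxx /= genmxE.
have [a [b [r [El Hsp]]]] := spanP (lnl_in m).
have /andP[ul lP] := allP chk_lines_in_ok _ (lnl_in m).
rewrite El in ul lP.
have [xa Ha] := vp_surj (allP lP a (mem_head _ _)).
have bl : b \in [:: a, b & r] by rewrite !inE eqxx orbT.
have [xb Hb] := vp_surj (allP lP b bl).
have xam : onlc xa m by rewrite /onlc Ha El mem_head.
have xbm : onlc xb m by rewrite /onlc Hb El !inE eqxx orbT.
have ab : xa != xb.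
  apply/eqP => E; move: ul; rewrite /= -Ha -Hb E inE eqxx /=; by [].
set S2 := (pt xa + pt xb)%MS.
have up : (\sum_(x | onlc x m) pt x <= S2)%MS.
  apply/sumsmx_subP => x xm.
  have [al [be E]] := Hsp (vp x) xm.
  rewrite /pt genmxE -E rv_add !rv_scale.
  by apply: addmx_sub_adds; apply: scalemx_sub; rewrite genmxE -?Ha -?Hb submx_refl.
have lo : (S2 <= \sum_(x | onlc x m) pt x)%MS.
  by rewrite addsmx_sub; apply/andP; split; [apply: (sumsmx_sup xa xam) | apply: (sumsmx_sup xb xbm)]; exact: submx_refl.
have -> : \rank (\sum_(x | onlc x m) pt x) = \rank S2.
  by apply: eqmx_rank; apply/andP; split.
have r1 : forall x, \rank (pt x) = 1%N by move=> x; rewrite /pt genmxE rank_rV rv_neq0.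
have le2 : (\rank S2 <= 2)%N by have := (mxrank_adds_leqif (pt xa) (pt xb)).1; rewrite !r1.
have ge1 : (1 <= \rank S2)%N by have := mxrankS (addsmxSl (pt xa) (pt xb)); rewrite r1.
suff ne1 : \rank S2 <> 1%N by apply/eqP; lia.
move=> e1.
have Ea : (pt xa == S2)%MS by rewrite -(mxrank_leqif_eq (addsmxSl _ _)).2 r1 e1.
have Eb : (pt xb == S2)%MS by rewrite -(mxrank_leqif_eq (addsmxSr _ _)).2 r1 e1.
have : (pt xa == pt xb)%MS.
  move/eqmxP: Ea => Ea; move/eqmxP: Eb => Eb; apply/eqmxP; exact: eqmx_trans Ea (eqmx_sym Eb).
move/genmxP; rewrite /pt !genmx_id => /pt_inj E.
by move: ab; rewrite E eqxx.
Qed.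

Local Close Scope ring_scope.

Theorem mainTheorem17 (S : {set 'M['F_5]_4}) :
  S \subset PGpoints 'F_5 ->
  #|S| = 25 ->
  spanning S ->
  divisible 5 S ->
  cylinder 5 S.
Proof.
move=> SP S25 _ Hd.
set S' := [set p | pt p \in S].
have SE : S = pt @: S'.
  apply/setP => A; apply/idP/imsetP => [AS|[p pS ->]]; last by rewrite inE in pS.
  have [p Ap] := pt_surj (subsetP SP _ AS); exists p => //; by rewrite inE -Ap.
have S'25 : #|S'| = 25 by have := S25; rewrite SE (card_imset _ pt_inj).
have Hdiv' : forall h, (5 %| #|[set x in S' | incc x h]|)%N.
  move=> h; have := Hd _ (pl_in h); rewrite S25.
  have -> : onsub S (pl h) = pt @: [set x in S' | incc x h].
    apply/setP => A; rewrite /onsub inE; apply/andP/imsetP => [[AS Ah]|[p]].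
      have [p Ap] := pt_surj (subsetP SP _ AS); exists p => //.
      by rewrite !inE -Ap AS /= -incE -Ap.
    by rewrite !inE => /andP[pS ph] ->; rewrite pS incE.
  by rewrite (card_imset _ pt_inj) => E; rewrite /dvdn E.
have [C [ms [msinj Cms HSx]]] :=
  core_main Hpl31c Hpt31c Hl6c Hjoinc Hsub2c Hpen6c Hpen1c S'25 Hdiv'.
exists (pt C), (fun i => Lm (ms i)); split.
- exact: pt_in.
- by move=> i; exact: Lm_in.
- move=> i j E; apply: msinj.
  have Hy : forall y, onlc y (ms i) = onlc y (ms j) by move=> y; rewrite -!incL E.
  have : (1 < #|[set x | onlc x (ms i)]|)%N by rewrite Hl6c.
  move/card_gt1P => [x [y [xm ym xy]]]; rewrite !inE in xm ym.
  by apply: (line_uniq Hjoinc xy xm ym); rewrite -Hy.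
- by move=> i; rewrite incL.
- apply/setP => A; rewrite inE; case: (boolP (A \in PGpoints 'F_5)) => AP /=.
    have [y ->] := pt_surj AP.
    have -> : (pt y \in S) = (y \in S') by rewrite inE.
    rewrite HSx (inj_eq pt_inj); congr (_ && _).
    by apply: eq_existsb => i; rewrite incL.
  by apply/negbTE; apply: contra AP; exact: (subsetP SP A).
Qed.
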